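(* For every $\alpha\in(0,\infty)$, $$\dim_H F(1/2,\alpha)=\frac12 .$$
   Context: Every $x\in(0,1)\setminus\mathbb{Q}$ has a unique infinite continued fraction expansion $x=[a_1(x),a_2(x),\dots]$ with partial quotients $a_i(x)\in\mathbb{N}=\{1,2,\dots\}$. For $n\in\mathbb{N}$ let $T_n(x):=\max\{a_k(x):1\le k\le n\}$ (the largest partial quotient among the first $n$). For $\gamma\in(0,\infty)$ and $\alpha\in(0,\infty)$ define $$F(\gamma,\alpha):=\Big\{x\in(0,1)\setminus\mathbb{Q}:\ \lim_{n\to\infty}\frac{T_n(x)}{e^{n^{\gamma}}}=\alpha\Big\}.$$ $\dim_H$ denotes Hausdorff dimension. *)

(* Defs.v *)
From Stdlib Require Import Reals ZArith.
Open Scope R_scope.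

Definition irrational (x : R) : Prop :=
  forall p q : Z, q <> 0%Z -> x <> IZR p / IZR q.

Definition gauss (x : R) : R := / x - IZR (Int_part (/ x)).

(** k-th partial quotient, k >= 1:  a_k(x) = floor(1 / G^(k-1)(x)). *)
Definition cf_digit (k : nat) (x : R) : R :=
  IZR (Int_part (/ (Nat.iter (k - 1) gauss x))).

(** T_n(x) = max { a_k(x) : 1 <= k <= n }  (T_0 := 0, never used). *)
Fixpoint Tmax (n : nat) (x : R) : R :=
  match n with
  | O => 0
  | S m => Rmax (Tmax m x) (cf_digit (S m) x)
  end.

Definition F_set (gamma alpha : R) (x : R) : Prop :=
  0 < x < 1 /\ irrational x /\
  Un_cv (fun n => Tmax (S n) x / exp (Rpower (INR (S n)) gamma)) alpha.

(** H^s(E) = 0: for every delta > 0, H^s_delta(E) = 0, i.e. for every eps > 0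
    there is a countable cover (U_i) of E by sets of diameter at most
    d_i <= delta with sum_i d_i^s <= eps.  (The d_i are upper bounds for the
    diameters, taken > 0; for s > 0 this gives the same infimum.) *)
Definition Hs_null (s : R) (E : R -> Prop) : Prop :=
  forall delta eps : R, 0 < delta -> 0 < eps ->
  exists (U : nat -> R -> Prop) (d : nat -> R),
    (forall x, E x -> exists i, U i x) /\
    (forall i, 0 < d i <= delta) /\
    (forall i x y, U i x -> U i y -> Rabs (x - y) <= d i) /\
    (forall N, sum_f_R0 (fun i => Rpower (d i) s) N <= eps).

Definition is_glb (A : R -> Prop) (m : R) : Prop :=
  (forall s, A s -> m <= s) /\ (forall b, (forall s, A s -> b <= s) -> b <= m).

Definition dimH_is (E : R -> Prop) (d : R) : Prop :=
  is_glb (fun s => 0 < s /\ Hs_null s E) d.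

(* Main.v *)
Require Import Defs.
From Stdlib Require Import Reals Lra Lia Psatz ZArith List Classical ClassicalEpsilon.
Open Scope R_scope.

Lemma Int_part_eq (z:Z) (u:R) : 0 <= u < 1 -> Int_part (IZR z + u) = z.
Proof. intros. symmetry. apply Int_part_spec. lra. Qed.

Lemma irr_neq0 x : irrational x -> x <> 0.
Proof. intros H E. apply (H 0%Z 1%Z); [lia|]. rewrite E. unfold Rdiv. simpl. ring. Qed.

Lemma gauss_decomp x : 0 < x < 1 -> irrational x ->
  (1 <= Int_part (/ x))%Z /\ / x = IZR (Int_part (/ x)) + gauss x /\
  0 < gauss x < 1 /\ irrational (gauss x).
Proof.
  intros Hx Hi. unfold gauss.
  assert (Hix : 1 < / x). { rewrite <- Rinv_1. apply Rinv_lt_contravar; lra. }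
  destruct (base_Int_part (/x)) as [B1 B2].
  set (a := Int_part (/x)) in *.
  assert (Ha : (1 <= a)%Z). { assert (0 < a)%Z by (apply lt_IZR; lra). lia. }
  assert (Hg0 : /x - IZR a <> 0).
  { intro E. refine (Hi 1%Z a _ _). lia. unfold Rdiv. replace (IZR a) with (/x) by lra.
    rewrite Rinv_inv. ring. }
  split; [exact Ha|]. split; [ring|]. split; [lra|].
  intros p q Hq E.
  assert (Hqr : IZR q <> 0) by (apply not_0_IZR; auto).
  assert (E2 : / x = (IZR a * IZR q + IZR p) / IZR q).
  { replace (/x) with (IZR a + (/x - IZR a)) by ring. rewrite E. field; auto. }
  assert (Hn : IZR a * IZR q + IZR p <> 0).
  { intro Z0. rewrite Z0 in E2. unfold Rdiv in E2. rewrite Rmult_0_l in E2.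
    assert (0 < /x) by lra. lra. }
  apply (Hi q (a*q+p)%Z).
  { intro Z0. apply Hn. rewrite <- mult_IZR, <- plus_IZR, Z0. reflexivity. }
  rewrite plus_IZR, mult_IZR.
  replace x with (/ / x) by (rewrite Rinv_inv; auto).
  rewrite E2. field. auto.
Qed.

Definition ctail (k : nat) (x : R) : R := Nat.iter k gauss x.

Lemma tail_S k x : ctail (S k) x = gauss (ctail k x).
Proof. reflexivity. Qed.

Lemma tail_props x : 0 < x < 1 -> irrational x ->
  forall k, 0 < ctail k x < 1 /\ irrational (ctail k x).
Proof.
  intros Hx Hi k. induction k as [|k [IH1 IH2]]; [simpl; auto|].
  rewrite tail_S. destruct (gauss_decomp _ IH1 IH2) as (_&_&?&?). auto.
Qed.

Definition dig (k : nat) (x : R) : Z := Int_part (/ ctail k x).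

Lemma cf_digit_dig k x : cf_digit (S k) x = IZR (dig k x).
Proof. unfold cf_digit, dig, ctail. replace (S k - 1)%nat with k by lia. reflexivity. Qed.

Lemma dig_props x : 0 < x < 1 -> irrational x -> forall k,
  (1 <= dig k x)%Z /\ / ctail k x = IZR (dig k x) + ctail (S k) x.
Proof.
  intros Hx Hi k. destruct (tail_props x Hx Hi k) as [H1 H2].
  destruct (gauss_decomp _ H1 H2) as (A&B&_). split; auto.
Qed.

(* convergents over reversed digit lists *)
Record PQ := mkPQ { P0 : R; Q0 : R; P1 : R; Q1 : R }.

Fixpoint pq (l : list Z) : PQ :=
  match l with
  | nil => mkPQ 1 0 0 1
  | a :: l' => let c := pq l' in mkPQ (P1 c) (Q1 c) (IZR a * P1 c + P0 c) (IZR a * Q1 c + Q0 c)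
  end.

Fixpoint lprod (l : list Z) : R :=
  match l with nil => 1 | a :: l' => IZR a * lprod l' end.

Lemma pq_inv l : Forall (fun a => (1 <= a)%Z) l ->
  0 <= Q0 (pq l) /\ 1 <= Q1 (pq l) /\ lprod l <= Q1 (pq l) /\ 1 <= lprod l /\
  (P0 (pq l) * Q1 (pq l) - P1 (pq l) * Q0 (pq l)) ^ 2 = 1.
Proof.
  induction l as [|a l IH]; intros HF.
  - simpl. repeat split; lra.
  - inversion HF; subst. destruct (IH H2) as (A&B&C&D&E).
    apply IZR_le in H1. simpl. repeat split; try nra.
Qed.

Fixpoint dl (x : R) (n : nat) : list Z :=
  match n with O => nil | S n' => dig n' x :: dl x n' end.

Lemma dl_Forall x n : 0 < x < 1 -> irrational x -> Forall (fun a => (1 <= a)%Z) (dl x n).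
Proof.
  intros Hx Hi. induction n; simpl; constructor; auto. apply (dig_props x Hx Hi n).
Qed.

Lemma dl_length x n : length (dl x n) = n.
Proof. induction n; simpl; auto. Qed.

Lemma pq_key x n : 0 < x < 1 -> irrational x ->
  let c := pq (dl x n) in let t := ctail n x in
  x * (Q1 c + t * Q0 c) = P1 c + t * P0 c.
Proof.
  intros Hx Hi. induction n as [|n IH]; simpl.
  - unfold ctail. simpl. ring.
  - simpl in IH. destruct (dig_props x Hx Hi n) as [_ E].
    destruct (tail_props x Hx Hi n) as [[T1 T2] _].
    set (t := ctail n x) in *. set (t' := ctail (S n) x) in *.
    set (a := IZR (dig n x)) in *.
    assert (Ht : t * (a + t') = 1). { rewrite <- E. field. lra. }
    set (Q1' := Q1 (pq (dl x n))) in *. set (Q0' := Q0 (pq (dl x n))) in *.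
    set (P1' := P1 (pq (dl x n))) in *. set (P0' := P0 (pq (dl x n))) in *.
    apply Rminus_diag_uniq. change (gauss t) with t'.
    replace (x * (a * Q1' + Q0' + t' * Q1') - (a * P1' + P0' + t' * P1'))
      with ((a + t') * (x * (Q1' + t * Q0') - (P1' + t * P0')) - (t * (a + t') - 1) * (x * Q0' - P0')) by ring.
    rewrite IH, Ht. ring.
Qed.

Lemma pq_close x n : 0 < x < 1 -> irrational x ->
  let c := pq (dl x n) in Rabs (x - P1 c / Q1 c) <= / (Q1 c) ^ 2.
Proof.
  intros Hx Hi c. pose proof (pq_key x n Hx Hi) as K. simpl in K. fold c in K.
  destruct (pq_inv _ (dl_Forall x n Hx Hi)) as (A&B&C&D&E). fold c in A,B,C,D,E.
  destruct (tail_props x Hx Hi n) as [[T1 T2] _].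
  set (t := ctail n x) in *.
  assert (Hd : 0 < Q1 c + t * Q0 c) by nra.
  assert (Ex : x = (P1 c + t * P0 c) / (Q1 c + t * Q0 c)).
  { rewrite <- K. field. lra. }
  assert (Ed : x - P1 c / Q1 c = t * (P0 c * Q1 c - P1 c * Q0 c) / (Q1 c * (Q1 c + t * Q0 c))).
  { rewrite Ex. field. lra. }
  rewrite Ed. set (D0 := P0 c * Q1 c - P1 c * Q0 c) in *.
  assert (HD : Rabs D0 = 1).
  { unfold Rabs; destruct Rcase_abs; nra. }
  unfold Rdiv. rewrite Rabs_mult, Rabs_mult, HD, Rabs_right by lra.
  rewrite Rabs_right.
  2:{ apply Rle_ge, Rlt_le, Rinv_0_lt_compat. nra. }
  rewrite Rmult_1_r.
  assert (0 <= t * Q0 c) by nra. apply Rle_trans with (t * / (Q1 c * Q1 c)).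
  - apply Rmult_le_compat_l; [lra|]. apply Rinv_le_contravar; nra.
  - simpl. rewrite Rmult_1_r. assert (0 < / (Q1 c * Q1 c)) by (apply Rinv_0_lt_compat; nra). nra.
Qed.

Definition lsum (l : list R) : R := fold_right Rplus 0 l.

Lemma lsum_app l1 l2 : lsum (l1 ++ l2) = lsum l1 + lsum l2.
Proof. induction l1; simpl; [ring|rewrite IHl1; ring]. Qed.

Lemma lsum_nonneg l : Forall (fun x => 0 <= x) l -> 0 <= lsum l.
Proof. induction 1; simpl; lra. Qed.

Lemma skipn_nth {A} (d : A) : forall (l : list A) n, (n < length l)%nat ->
  skipn n l = nth n l d :: skipn (S n) l.
Proof.
  induction l as [|a l IH]; intros n Hn; simpl in *; [lia|].
  destruct n; simpl; auto. apply IH. lia.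
Qed.

Lemma sum_nth_skipn {A} (d : A) (w : A -> R) : forall N (l : list A), (S N <= length l)%nat ->
  sum_f_R0 (fun j => w (nth j l d)) N + lsum (map w (skipn (S N) l)) = lsum (map w l).
Proof.
  induction N as [|N IH]; intros l Hl.
  - destruct l as [|a l]; simpl in *; [lia|]. ring.
  - simpl. rewrite <- (IH l) by lia. rewrite (skipn_nth d l (S N)) by lia. simpl. ring.
Qed.

Lemma sum_nth_le {A} (d : A) (w : A -> R) N (l : list A) : (S N <= length l)%nat ->
  (forall a, 0 <= w a) ->
  sum_f_R0 (fun j => w (nth j l d)) N <= lsum (map w l).
Proof.
  intros Hl Hw. rewrite <- (sum_nth_skipn d w N l Hl).
  assert (0 <= lsum (map w (skipn (S N) l))).
  { apply lsum_nonneg. apply Forall_forall. intros x Hx. apply in_map_iff in Hx.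
    destruct Hx as (y&<-&_). auto. }
  lra.
Qed.


Definition big {A} (L : nat -> list A) (n : nat) : list A := flat_map L (seq 0 n).

Lemma big_S {A} (L : nat -> list A) n : big L (S n) = big L n ++ L n.
Proof. unfold big. rewrite seq_S, flat_map_app. simpl. rewrite app_nil_r. reflexivity. Qed.

Lemma big_length {A} (L : nat -> list A) n : (forall k, (1 <= length (L k))%nat) -> (n <= length (big L n))%nat.
Proof. intros H. induction n; [simpl; lia|]. rewrite big_S, length_app. specialize (H n). lia. Qed.

Lemma big_prefix {A} (L : nat -> list A) n m : (n <= m)%nat -> exists r, big L m = big L n ++ r.
Proof.
  induction 1. exists nil. rewrite app_nil_r; auto.
  destruct IHle as [r Hr]. exists (r ++ L m). rewrite big_S, Hr, app_assoc. auto.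
Qed.

Lemma big_nth_stable {A} (d : A) (L : nat -> list A) i n m : (i < length (big L n))%nat -> (n <= m)%nat ->
  nth i (big L m) d = nth i (big L n) d.
Proof.
  intros Hi Hnm. destruct (big_prefix L n m Hnm) as [r Hr]. rewrite Hr. apply app_nth1. auto.
Qed.

Lemma lsum_big {A} (w : A -> R) (L : nat -> list A) n (b : nat -> R) :
  (forall k, lsum (map w (L k)) <= b k) -> lsum (map w (big L n)) <= sum_f_R0 b n - b n.
Proof.
  intros H. induction n.
  - simpl. lra.
  - rewrite big_S, map_app, lsum_app. simpl. specialize (H n). lra.
Qed.

Lemma geom_half eps n : sum_f_R0 (fun k => eps / 2 ^ (S k)) n = eps * (1 - / 2 ^ (S n)).
Proof.
  induction n.
  - simpl. field.
  - change (sum_f_R0 (fun k => eps / 2 ^ (S k)) (S n)) with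
      (sum_f_R0 (fun k => eps / 2 ^ (S k)) n + eps / 2 ^ (S (S n))).
    rewrite IHn. simpl. field. apply pow_nonzero. lra.
Qed.

Lemma Rpower_inv_s y s : 0 < y -> 0 < s -> Rpower (Rpower y (/ s)) s = y.
Proof. intros. rewrite Rpower_mult. rewrite Rinv_l by lra. apply Rpower_1; auto. Qed.

Lemma Rpower_pos x y : 0 < Rpower x y.
Proof. unfold Rpower. apply exp_pos. Qed.

Lemma hs_from_pieces (s : R) (E : R -> Prop) (Ek : nat -> R -> Prop) :
  0 < s ->
  (forall x, E x -> exists k, Ek k x) ->
  (forall k delta eps, 0 < delta -> 0 < eps -> exists L : list (R*R),
     (forall x, Ek k x -> exists cr, In cr L /\ Rabs (x - fst cr) <= snd cr) /\
     (forall cr, In cr L -> 0 < 2 * snd cr <= delta) /\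
     lsum (map (fun cr => Rpower (2 * snd cr) s) L) <= eps) ->
  Hs_null s E.
Proof.
  intros Hs HE HK delta eps Hd He.
  set (ek := fun k : nat => eps / 2 ^ (S (S k))).
  assert (Hek : forall k, 0 < ek k).
  { intro k. unfold ek. apply Rdiv_lt_0_compat; auto. apply pow_lt. lra. }
  set (L0 := fun k => proj1_sig (constructive_indefinite_description _ (HK k delta (ek k) Hd (Hek k)))).
  assert (HL0 : forall k, (forall x, Ek k x -> exists cr, In cr (L0 k) /\ Rabs (x - fst cr) <= snd cr) /\
     (forall cr, In cr (L0 k) -> 0 < 2 * snd cr <= delta) /\
     lsum (map (fun cr => Rpower (2 * snd cr) s) (L0 k)) <= ek k).
  { intro k. unfold L0. destruct (constructive_indefinite_description _ _). simpl. auto. }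
  set (rk := fun k => Rmin delta (Rpower (ek k) (/ s)) / 2).
  assert (Hrk : forall k, 0 < 2 * rk k <= delta /\ Rpower (2 * rk k) s <= ek k).
  { intro k. unfold rk. assert (0 < Rmin delta (Rpower (ek k) (/ s))).
    { apply Rmin_pos; auto. apply Rpower_pos. }
    replace (2 * (Rmin delta (Rpower (ek k) (/ s)) / 2)) with (Rmin delta (Rpower (ek k) (/ s))) by field.
    split. split; auto. apply Rmin_l.
    rewrite <- (Rpower_inv_s (ek k) s) at 2 by auto.
    apply Rle_Rpower_l; [lra|]. split; auto. apply Rmin_r. }
  set (L := fun k => L0 k ++ (0, rk k) :: nil).
  set (w := fun cr : R*R => Rpower (2 * snd cr) s).
  assert (HL1 : forall k, (1 <= length (L k))%nat).
  { intro k. unfold L. rewrite length_app. simpl. lia. }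
  assert (HLw : forall k, lsum (map w (L k)) <= eps / 2 ^ (S k)).
  { intro k. unfold L. rewrite map_app, lsum_app. simpl. destruct (HL0 k) as (_&_&H3).
    destruct (Hrk k) as [_ H4]. fold w in H3. unfold w at 2. simpl.
    assert (eps / 2 ^ (S k) = ek k + ek k) by (unfold ek; simpl; field; apply pow_nonzero; lra).
    simpl in H. lra. }
  assert (HLd : forall k cr, In cr (L k) -> 0 < 2 * snd cr <= delta).
  { intros k cr Hin. unfold L in Hin. apply in_app_or in Hin. destruct Hin as [Hin|Hin].
    - destruct (HL0 k) as (_&H2&_). auto.
    - simpl in Hin. destruct Hin as [<-|[]]. simpl. apply Hrk. }
  set (CC := fun i => nth i (big L (S i)) (0, rk 0%nat)).
  assert (HCCin : forall i, exists k, In (CC i) (L k)).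
  { intro i. unfold CC. assert (Hlen := big_length L (S i) HL1).
    assert (In (nth i (big L (S i)) (0, rk 0%nat)) (big L (S i))) by (apply nth_In; lia).
    unfold big in H. apply in_flat_map in H. destruct H as (k&_&Hk). eauto. }
  exists (fun i x => Rabs (x - fst (CC i)) <= snd (CC i)), (fun i => 2 * snd (CC i)).
  split; [|split; [|split]].
  - intros x Hx. destruct (HE x Hx) as [k Hk]. destruct (HL0 k) as (H1&_&_).
    destruct (H1 x Hk) as (cr&Hin&Hcr).
    assert (Hin' : In cr (big L (S k))).
    { rewrite big_S. apply in_or_app. right. unfold L. apply in_or_app. left. auto. }
    destruct (In_nth _ _ (0, rk 0%nat) Hin') as (i&Hi&Hni).
    exists i. unfold CC.
    assert (Heq : nth i (big L (S i)) (0, rk 0%nat) = cr).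
    { destruct (Nat.le_gt_cases k i) as [Hki|Hki].
      - rewrite (big_nth_stable _ L i (S k) (S i)) by (auto; lia). auto.
      - rewrite <- Hni. symmetry. apply big_nth_stable; [|lia].
        pose proof (big_length L (S i) HL1). lia. }
    rewrite Heq. auto.
  - intro i. destruct (HCCin i) as [k Hk]. apply (HLd k); auto.
  - intros i x y Hx Hy. replace (x - y) with ((x - fst (CC i)) - (y - fst (CC i))) by ring.
    eapply Rle_trans; [apply Rabs_triang|]. rewrite Rabs_Ropp. lra.
  - intro N.
    assert (Hst : forall j, (j <= N)%nat -> CC j = nth j (big L (S N)) (0, rk 0%nat)).
    { intros j Hj. unfold CC. symmetry. apply big_nth_stable; [|lia].
      pose proof (big_length L (S j) HL1). lia. }
    rewrite (sum_eq _ (fun j => w (nth j (big L (S N)) (0, rk 0%nat)))).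
    2:{ intros j Hj. unfold w. rewrite Hst; auto. }
    eapply Rle_trans. apply sum_nth_le.
    + pose proof (big_length L (S N) HL1). lia.
    + intro a. unfold w. left. apply Rpower_pos.
    + eapply Rle_trans. apply (lsum_big w L (S N) (fun k => eps / 2 ^ (S k))). auto.
      rewrite geom_half. simpl.
      assert (0 < / (2 * (2 * 2 ^ N))). { apply Rinv_0_lt_compat. assert (0 < 2 ^ N) by (apply pow_lt; lra). lra. }
      unfold Rdiv. nra.
Qed.

Lemma exp_le x y : x <= y -> exp x <= exp y.
Proof. intros [H|H]; [left; apply exp_increasing; auto|subst; lra]. Qed.

Lemma ln_le' x y : 0 < x -> x <= y -> ln x <= ln y.
Proof. intros H [H1|H1]; [left; apply ln_increasing; auto|subst; lra]. Qed.

Lemma ln_le_xm1 x : 0 < x -> ln x <= x - 1.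
Proof. intros H. pose proof (exp_ineq1_le (ln x)). rewrite exp_ln in H0 by auto. lra. Qed.

Lemma Rpower_le_base a b c : 0 <= c -> 0 < a <= b -> Rpower a c <= Rpower b c.
Proof. apply Rle_Rpower_l. Qed.

Lemma zeta_step (k r : R) : 1 <= k -> 0 < r ->
  r * Rpower (k+1) (-(r+1)) <= Rpower k (-r) - Rpower (k+1) (-r).
Proof.
  intros Hk Hr.
  assert (Ek : k = (k+1) * (k/(k+1))) by (field; lra).
  assert (H1 : Rpower k (-r) = Rpower (k+1) (-r) * Rpower (k/(k+1)) (-r)).
  { rewrite Rpower_mult_distr; [|lra|apply Rdiv_lt_0_compat; lra]. rewrite <- Ek. auto. }
  assert (H2 : 1 + r / (k+1) <= Rpower (k/(k+1)) (-r)).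
  { unfold Rpower. eapply Rle_trans; [|apply exp_ineq1_le].
    assert (ln (k/(k+1)) <= k/(k+1) - 1) by (apply ln_le_xm1; apply Rdiv_lt_0_compat; lra).
    assert (k/(k+1) - 1 = - (1/(k+1))) by (field; lra).
    unfold Rdiv in *. nra. }
  assert (H3 : Rpower (k+1) (-(r+1)) = Rpower (k+1) (-r) * / (k+1)).
  { replace (-(r+1)) with (-r + - (1)) by ring. rewrite Rpower_plus. f_equal. rewrite Rpower_Ropp, Rpower_1 by lra. auto. }
  rewrite H1, H3. pose proof (Rpower_pos (k+1) (-r)).
  unfold Rdiv in H2. nra.
Qed.

Definition digs (B : nat) : list Z := map Z.of_nat (seq 1 B).

Lemma Rpower_1_base y : Rpower 1 y = 1.
Proof. unfold Rpower. rewrite ln_1, Rmult_0_r, exp_0. auto. Qed.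

Lemma IZR_of_nat_S n : IZR (Z.of_nat (S n)) = INR n + 1.
Proof. rewrite <- INR_IZR_INZ, S_INR. auto. Qed.

Lemma zeta_bound t B : 1 < t ->
  lsum (map (fun a => Rpower (IZR a) (-t)) (digs B)) <= 1 + 1/(t-1).
Proof.
  intros Ht. set (r := t - 1).
  assert (Hr : 0 < r) by (unfold r; lra).
  assert (H : forall n, lsum (map (fun a => Rpower (IZR a) (-t)) (digs (S n))) <= 1 + (1 - Rpower (INR (S n)) (-r)) / r).
  { induction n.
    - simpl. change (IZR (Z.of_nat 1)) with 1. rewrite !Rpower_1_base. unfold Rdiv. lra.
    - assert (Es : lsum (map (fun a => Rpower (IZR a) (-t)) (digs (S (S n)))) =
        lsum (map (fun a => Rpower (IZR a) (-t)) (digs (S n))) + Rpower (INR (S n) + 1) (-t)).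
      { unfold digs at 1. rewrite seq_S, !map_app, lsum_app. f_equal.
        replace (1 + S n)%nat with (S (S n)) by lia.
        cbv [lsum map fold_right]. rewrite IZR_of_nat_S. ring. }
      rewrite Es.
      pose proof (zeta_step (INR (S n)) r) as Z1.
      assert (1 <= INR (S n)) by (rewrite S_INR; pose proof (pos_INR n); lra).
      specialize (Z1 H Hr). replace (-(r+1)) with (-t) in Z1 by (unfold r; ring).
      replace (INR (S (S n))) with (INR (S n) + 1) by (rewrite (S_INR (S n)); ring).
      unfold Rdiv in *. assert (0 < /r) by (apply Rinv_0_lt_compat; auto).
      apply Rmult_le_compat_l with (r := /r) in Z1; [|lra].
      replace (/ r * (r * Rpower (INR (S n) + 1) (- t))) with (Rpower (INR (S n) + 1) (- t)) in Z1 by (field; lra).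
      nra. }
  destruct B. simpl. unfold r. assert (0 < 1/(t-1)) by (apply Rdiv_lt_0_compat; lra). lra.
  eapply Rle_trans; [apply H|]. pose proof (Rpower_pos (INR (S B)) (-r)).
  fold r. unfold Rdiv. assert (0 < /r) by (apply Rinv_0_lt_compat; auto). nra.
Qed.

Definition tup (B : nat) : nat -> list (list Z) :=
  fix tup N := match N with O => nil :: nil | S N' => flat_map (fun l => map (fun a => a :: l) (digs B)) (tup N') end.

Fixpoint lprodR (g : Z -> R) (l : list Z) : R := match l with nil => 1 | a :: l' => g a * lprodR g l' end.

Lemma lsum_flat_map {A B} (f : B -> R) (h : A -> list B) (L : list A) :
  lsum (map f (flat_map h L)) = lsum (map (fun a => lsum (map f (h a))) L).
Proof. induction L; simpl; auto. rewrite map_app, lsum_app, IHL. auto. Qed.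

Lemma lsum_map_mult {A} c (g : A -> R) l : lsum (map (fun a => c * g a) l) = c * lsum (map g l).
Proof. induction l; simpl; [ring|rewrite IHl; ring]. Qed.

Lemma lsum_ext {A} (f g : A -> R) l : (forall a, In a l -> f a = g a) -> lsum (map f l) = lsum (map g l).
Proof. induction l; simpl; intros; auto. rewrite H, IHl; auto. Qed.

Lemma lsum_le {A} (f g : A -> R) l : (forall a, In a l -> f a <= g a) -> lsum (map f l) <= lsum (map g l).
Proof. induction l; simpl; intros; [lra|]. pose proof (H a (or_introl eq_refl)). pose proof (IHl (fun b h => H b (or_intror h))). lra. Qed.

Lemma tup_sum g B N : lsum (map (lprodR g) (tup B N)) = (lsum (map g (digs B))) ^ N.
Proof.
  induction N; simpl. ring.
  rewrite lsum_flat_map. rewrite <- IHN, <- lsum_map_mult.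
  apply lsum_ext. intros l _. rewrite map_map. simpl.
  rewrite Rmult_comm, <- lsum_map_mult. apply lsum_ext. intros; ring.
Qed.

Lemma tup_in B : forall l, Forall (fun a => (1 <= a <= Z.of_nat B)%Z) l -> In l (tup B (length l)).
Proof.
  induction l as [|a l IH]; intros HF; simpl; auto.
  inversion HF; subst. apply in_flat_map. exists l. split; auto.
  apply in_map_iff. exists a. split; auto. unfold digs. apply in_map_iff.
  exists (Z.to_nat a). split. lia. apply in_seq. lia.
Qed.

Lemma tup_Forall B : forall N l, In l (tup B N) -> Forall (fun a => (1 <= a)%Z) l.
Proof.
  induction N; simpl; intros l H.
  - destruct H as [<-|[]]; auto.
  - apply in_flat_map in H. destruct H as (l'&H1&H2). apply in_map_iff in H2.
    destruct H2 as (a&<-&Ha). constructor; auto. unfold digs in Ha. apply in_map_iff in Ha.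
    destruct Ha as (n&<-&Hn). apply in_seq in Hn. lia.
Qed.

Lemma lprod_pos l : Forall (fun a => (1 <= a)%Z) l -> 1 <= lprod l.
Proof. induction 1; simpl; [lra|]. apply IZR_le in H. nra. Qed.

Lemma Rpower_lprod y l : Forall (fun a => (1 <= a)%Z) l -> Rpower (lprod l) y = lprodR (fun a => Rpower (IZR a) y) l.
Proof.
  induction 1; simpl. apply Rpower_1_base.
  rewrite <- IHForall. apply IZR_le in H. pose proof (lprod_pos _ H0).
  rewrite Rpower_mult_distr; auto; lra.
Qed.

Lemma lsum_filter_le {A} (p : A -> bool) (f g : A -> R) l :
  (forall a, In a l -> p a = true -> f a <= g a) -> (forall a, In a l -> 0 <= g a) ->
  lsum (map f (filter p l)) <= lsum (map g l).
Proof.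
  induction l; simpl; intros H1 H2; [lra|].
  assert (IH := IHl (fun b h => H1 b (or_intror h)) (fun b h => H2 b (or_intror h))).
  destruct (p a) eqn:E; simpl.
  - pose proof (H1 a (or_introl eq_refl) E). lra.
  - pose proof (H2 a (or_introl eq_refl)). lra.
Qed.

Lemma nat_above r : exists n : nat, r <= INR n.
Proof.
  destruct (archimed r) as [H _].
  destruct (Z_lt_le_dec (up r) 0).
  - exists 0%nat. simpl. apply IZR_lt in l. lra.
  - exists (Z.to_nat (up r)). rewrite INR_IZR_INZ, Z2Nat.id by auto. lra.
Qed.

Lemma Int_part_nat r : 0 <= r -> exists d : nat, r - 1 < INR d <= r.
Proof.
  intros Hr. destruct (base_Int_part r) as [B1 B2].
  assert (H0 : (0 <= Int_part r)%Z). { assert (-1 < Int_part r)%Z by (apply lt_IZR; simpl; lra). lia. }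
  exists (Z.to_nat (Int_part r)). rewrite INR_IZR_INZ, Z2Nat.id by auto. lra.
Qed.

Lemma prod_growth (alpha theta : R) (N0 : nat) :
  0 < alpha -> 0 < theta -> exists N1 : nat, forall (T P : nat -> R),
  (forall n, 1 <= P n) ->
  (forall m n, (m <= n)%nat -> T m < T n -> P m * T n <= P n) ->
  (forall n, (N0 <= n)%nat -> alpha * exp (- (theta / 2)) * exp (sqrt (INR n)) <= T n <= alpha * exp (theta / 2) * exp (sqrt (INR n))) ->
  forall n, exp ((INR n - INR N1) / (4 * theta)) <= P n.
Proof.
  intros Ha Ht.
  set (K := / (4 * theta)). assert (HK : 0 < K) by (unfold K; apply Rinv_0_lt_compat; lra).
  set (c := ln alpha - theta / 2).
  set (R0 := 1 / theta + 6 * theta + 4 * Rabs c + 1).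
  assert (HR0 : 1/theta <= R0 /\ 6 * theta <= R0 /\ 4 * Rabs c <= R0 /\ 1 <= R0).
  { unfold R0. assert (0 < 1/theta) by (apply Rdiv_lt_0_compat; lra). pose proof (Rabs_pos c). lra. }
  destruct (nat_above (R0 * R0 + 2 * INR N0)) as [N1 HN1].
  exists N1. intros T P HP HPT HT.
  assert (Main : forall k n, (n <= k)%nat -> exp (K * (INR n - INR N1)) <= P n).
  2:{ intro n. replace ((INR n - INR N1) / (4 * theta)) with (K * (INR n - INR N1)) by (unfold K; field; lra).
      apply (Main n n). lia. }
  induction k as [|k IH]; intros n Hn.
  - assert (n = 0%nat) by lia. subst. simpl. rewrite Rminus_0_l.
    eapply Rle_trans; [|apply HP]. rewrite <- exp_0. apply exp_le. pose proof (pos_INR N1). nra.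
  - destruct (Nat.le_gt_cases n N1) as [Hle|Hgt].
    + eapply Rle_trans; [|apply HP]. rewrite <- exp_0. apply exp_le.
      apply le_INR in Hle. nra.
    + apply lt_INR in Hgt.
      set (sq := sqrt (INR n)).
      assert (Hsq : sq * sq = INR n) by (apply sqrt_sqrt; apply pos_INR).
      assert (Hsq0 : 0 <= sq) by apply sqrt_pos.
      assert (HsqR : R0 <= sq).
      { unfold sq. rewrite <- (sqrt_square R0) by lra. apply sqrt_le_1_alt. pose proof (pos_INR N0). lra. }
      destruct (Int_part_nat (3 * theta * sq)) as [d [Hd1 Hd2]]. nra.
      assert (Hts : 1 <= theta * sq).
      { destruct HR0 as (H1&_). unfold Rdiv in H1. rewrite Rmult_1_l in H1.
        apply Rmult_le_compat_l with (r := theta) in H1; [|lra]. rewrite Rinv_r in H1 by lra. nra. }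
      assert (Hd3 : 2 * theta * sq < INR d) by lra.
      assert (Hd4 : INR d <= INR n / 2) by nra.
      assert (Hdn : (d <= n)%nat). { apply INR_le. pose proof (pos_INR n). lra. }
      assert (Hd1' : (1 <= d)%nat). { destruct d; [simpl in Hd3; nra|lia]. }
      set (m := (n - d)%nat).
      assert (Hm : INR m = INR n - INR d) by (unfold m; rewrite minus_INR; auto).
      assert (HmN0 : (N0 <= m)%nat). { apply INR_le. assert (0 <= R0 * R0) by nra. lra. }
      assert (Hmk : (m <= k)%nat) by (unfold m; lia).
      specialize (IH m Hmk).
      set (sm := sqrt (INR m)).
      assert (Hsm : sm * sm = INR m) by (apply sqrt_sqrt; apply pos_INR).
      assert (Hsm0 : 0 <= sm) by apply sqrt_pos.
      assert (Hsmsq : sm <= sq) by (apply sqrt_le_1_alt; lra).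
      assert (Hgap : theta < sq - sm).
      { destruct (Rlt_or_le theta (sq - sm)); auto.
        assert ((sq - sm) * (sq + sm) = INR d) by nra.
        assert ((sq - sm) * (sq + sm) <= theta * (2 * sq)) by nra. lra. }
      assert (HTmn : T m < T n).
      { destruct (HT m HmN0) as [_ H1]. destruct (HT n ltac:(lia)) as [H2 _]. fold sm in H1. fold sq in H2.
        eapply Rle_lt_trans; [apply H1|]. eapply Rlt_le_trans; [|apply H2].
        rewrite !Rmult_assoc. apply Rmult_lt_compat_l; auto. rewrite <- !exp_plus.
        apply exp_increasing. lra. }
      eapply Rle_trans; [|apply (HPT m n); auto; unfold m; lia].
      destruct (HT n ltac:(lia)) as [H2 _]. fold sq in H2.
      assert (Hpos : 0 < alpha * exp (- (theta / 2)) * exp sq) by (apply Rmult_lt_0_compat; [apply Rmult_lt_0_compat; auto; apply exp_pos|apply exp_pos]).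
      apply Rle_trans with (exp (K * (INR m - INR N1)) * (alpha * exp (- (theta / 2)) * exp sq)).
      2:{ apply Rmult_le_compat; auto; left; [apply exp_pos|exact Hpos]. }
      replace (alpha * exp (- (theta / 2)) * exp sq) with (exp (c + sq)).
      2:{ unfold c. rewrite <- (exp_ln alpha) at 2 by auto. rewrite <- !exp_plus. f_equal; ring. }
      rewrite <- exp_plus. apply exp_le.
      assert (HKd : K * INR d <= 3 / 4 * sq).
      { apply Rle_trans with (K * (3 * theta * sq)). apply Rmult_le_compat_l; lra.
        unfold K. right. field. lra. }
      assert (Hc : 0 <= c + sq / 4).
      { destruct HR0 as (_&_&H3&_). pose proof (Rabs_pos c).
        destruct (Rle_or_lt 0 c). lra. rewrite Rabs_left in H3 by auto. lra. }
      rewrite Hm. nra.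
Qed.

Lemma Tmax_S m x : Tmax (S m) x = Rmax (Tmax m x) (IZR (dig m x)).
Proof. simpl. rewrite cf_digit_dig. auto. Qed.

Lemma Tmax_mono x m n : (m <= n)%nat -> Tmax m x <= Tmax n x.
Proof. induction 1; [lra|]. rewrite Tmax_S. eapply Rle_trans; [apply IHle|apply Rmax_l]. Qed.

Lemma Tmax_ge_dig x k n : (k < n)%nat -> IZR (dig k x) <= Tmax n x.
Proof.
  intros H. apply Rle_trans with (Tmax (S k) x). rewrite Tmax_S. apply Rmax_r.
  apply Tmax_mono. lia.
Qed.

Lemma Tmax_record x m n : (m <= n)%nat -> Tmax m x < Tmax n x ->
  exists k, (m <= k < n)%nat /\ Tmax n x <= IZR (dig k x).
Proof.
  induction 1 as [|m0 Hle IHle]; intros H0; [lra|].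
  rewrite Tmax_S in *. unfold Rmax in *. destruct (Rle_dec (Tmax m0 x) (IZR (dig m0 x))).
  - exists m0. split; [lia|lra].
  - destruct (IHle H0) as (k&Hk&Hk2). exists k. split; [lia|lra].
Qed.

Lemma lprod_dl_mono x m n : 0 < x < 1 -> irrational x -> (m <= n)%nat -> lprod (dl x m) <= lprod (dl x n).
Proof.
  intros Hx Hi. induction 1; [lra|]. simpl. destruct (dig_props x Hx Hi m0) as [H1 _].
  apply IZR_le in H1. pose proof (lprod_pos _ (dl_Forall x m0 Hx Hi)). nra.
Qed.

Lemma lprod_dl_rec x m k n : 0 < x < 1 -> irrational x -> (m <= k < n)%nat ->
  lprod (dl x m) * IZR (dig k x) <= lprod (dl x n).
Proof.
  intros Hx Hi [H1 H2]. induction H2.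
  - simpl. pose proof (lprod_dl_mono x m k Hx Hi H1). destruct (dig_props x Hx Hi k) as [D _].
    apply IZR_le in D. nra.
  - simpl. destruct (dig_props x Hx Hi m0) as [D _]. apply IZR_le in D.
    pose proof (lprod_pos _ (dl_Forall x m0 Hx Hi)). nra.
Qed.

Lemma dl_Forall_P x n (P : Z -> Prop) : (forall i, (i < n)%nat -> P (dig i x)) -> Forall P (dl x n).
Proof. induction n; intros H; simpl; constructor; auto. Qed.

Lemma le_Int_part z r : IZR z <= r -> (z <= Int_part r)%Z.
Proof.
  intros H. destruct (base_Int_part r) as [B1 B2].
  assert (z - 1 < Int_part r)%Z. { apply lt_IZR. rewrite minus_IZR. simpl. lra. } lia.
Qed.

Lemma Rpower_half_sqrt n : Rpower (INR (S n)) (1/2) = sqrt (INR (S n)).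
Proof. replace (1/2) with (/2) by field. apply Rpower_sqrt. apply lt_0_INR. lia. Qed.

Lemma exp_INR_mult a n : exp (a * INR n) = exp a ^ n.
Proof.
  induction n. simpl. rewrite Rmult_0_r. apply exp_0.
  rewrite S_INR, Rmult_plus_distr_l, Rmult_1_r, exp_plus, IHn. simpl. ring.
Qed.

Lemma F_eventually alpha theta x : 0 < alpha -> 0 < theta -> F_set (1/2) alpha x ->
  exists N0, forall n, (N0 <= n)%nat ->
   alpha * exp (- (theta / 2)) * exp (sqrt (INR n)) <= Tmax n x <= alpha * exp (theta / 2) * exp (sqrt (INR n)).
Proof.
  intros Ha Ht (_&_&Hcv).
  set (e1 := alpha - alpha * exp (- (theta/2))). set (e2 := alpha * exp (theta/2) - alpha).
  assert (He1 : 0 < e1). { unfold e1. assert (exp (- (theta/2)) < 1). { rewrite <- exp_0. apply exp_increasing. lra. } nra. }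
  assert (He2 : 0 < e2). { unfold e2. assert (1 < exp (theta/2)). { rewrite <- exp_0. apply exp_increasing. lra. } nra. }
  destruct (Hcv (Rmin e1 e2) (Rmin_pos _ _ He1 He2)) as [N HN].
  exists (S N). intros n Hn. destruct n as [|n]; [lia|].
  specialize (HN n ltac:(lia)). unfold Rdist in HN. rewrite Rpower_half_sqrt in HN.
  pose proof (Rmin_l e1 e2). pose proof (Rmin_r e1 e2).
  set (E := exp (sqrt (INR (S n)))) in *. assert (HE : 0 < E) by apply exp_pos.
  set (T := Tmax (S n) x) in *.
  apply Rabs_def2 in HN. destruct HN as [A1 A2].
  assert (T / E < alpha * exp (theta/2)) by (unfold e2 in *; lra).
  assert (alpha * exp (- (theta/2)) < T / E) by (unfold e1 in *; lra).
  assert (ET : T = (T / E) * E) by (field; lra).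
  split; rewrite ET; nra.
Qed.

Lemma pw_bound s s' a P Q : 0 < s' < s -> 0 <= a -> exp a <= P <= Q ->
  Rpower (2 * / Q ^ 2) s <= Rpower 2 s * exp (-2 * (s - s') * a) * Rpower P (- (2 * s')).
Proof.
  intros Hs Ha [H1 H2].
  assert (HP1 : 1 <= P). { pose proof (exp_ineq1_le a). lra. }
  apply Rle_trans with (Rpower (2 * / P ^ 2) s).
  { apply Rle_Rpower_l; [lra|]. split.
    - apply Rmult_lt_0_compat; [lra|]. apply Rinv_0_lt_compat. nra.
    - apply Rmult_le_compat_l; [lra|]. apply Rinv_le_contravar; nra. }
  unfold Rpower. rewrite <- !exp_plus. apply exp_le.
  rewrite ln_mult by (try lra; apply Rinv_0_lt_compat; nra).
  rewrite ln_Rinv by nra. rewrite ln_pow by lra. simpl INR.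
  assert (a <= ln P). { rewrite <- (ln_exp a). apply ln_le'; auto. apply exp_pos. }
  nra.
Qed.

Lemma lprodR_pos g l : (forall a, 0 < g a) -> 0 < lprodR g l.
Proof. intros H. induction l; simpl; [lra|]. specialize (H a). nra. Qed.

Lemma upper alpha s : 0 < alpha -> 1/2 < s -> Hs_null s (F_set (1/2) alpha).
Proof.
  intros Ha Hs.
  set (s' := (s + 1/2) / 2). set (t := 2 * s'). set (Zt := 1 + 1 / (t - 1)).
  assert (Ht : 1 < t) by (unfold t, s'; lra).
  assert (HZt : 1 < Zt). { unfold Zt. assert (0 < 1/(t-1)) by (apply Rdiv_lt_0_compat; lra). lra. }
  assert (Hss : 0 < s' < s) by (unfold s'; lra).
  set (K := Zt / (s - s')). assert (HK : 0 < K) by (unfold K; apply Rdiv_lt_0_compat; lra).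
  set (theta := / (4 * K)). assert (Hth : 0 < theta) by (unfold theta; apply Rinv_0_lt_compat; lra).
  assert (Hth4 : / (4 * theta) = K) by (unfold theta; field; lra).
  assert (HKZ : (s - s') * K = Zt) by (unfold K; field; lra).
  apply (hs_from_pieces s (F_set (1/2) alpha)
    (fun k x => F_set (1/2) alpha x /\ forall n, (k <= n)%nat ->
       alpha * exp (- (theta / 2)) * exp (sqrt (INR n)) <= Tmax n x <= alpha * exp (theta / 2) * exp (sqrt (INR n)))).
  { lra. }
  { intros x Hx. destruct (F_eventually alpha theta x Ha Hth Hx) as [N0 HN0]. exists N0. auto. }
  intros k delta eps Hd He.
  destruct (prod_growth alpha theta k Ha Hth) as [N1 HN1].
  assert (Hq : Rabs (1/2) < 1) by (rewrite Rabs_right; lra).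
  assert (Hy1 : 0 < eps / (Rpower 2 s * exp (2 * Zt * INR N1))).
  { apply Rdiv_lt_0_compat; auto. apply Rmult_lt_0_compat; [apply Rpower_pos|apply exp_pos]. }
  destruct (pow_lt_1_zero (1/2) Hq _ Hy1) as [Na HNa].
  assert (Hq2 : Rabs (exp (-2 * K)) < 1).
  { rewrite Rabs_right by (left; apply exp_pos). rewrite <- exp_0. apply exp_increasing. lra. }
  assert (Hy2 : 0 < delta / (2 * exp (2 * K * INR N1))).
  { apply Rdiv_lt_0_compat; auto. apply Rmult_lt_0_compat; [lra|apply exp_pos]. }
  destruct (pow_lt_1_zero _ Hq2 _ Hy2) as [Nb HNb].
  set (N := Nat.max (Nat.max Na Nb) (Nat.max k N1)).
  assert (HNk : (k <= N)%nat) by (unfold N; lia).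
  assert (HNN1 : (N1 <= N)%nat) by (unfold N; lia).
  specialize (HNa N ltac:(unfold N; lia)). specialize (HNb N ltac:(unfold N; lia)).
  set (bnd := alpha * exp (theta / 2) * exp (sqrt (INR N))).
  assert (Hbnd : 0 < bnd) by (unfold bnd; repeat apply Rmult_lt_0_compat; auto; apply exp_pos).
  set (B := Z.to_nat (Int_part bnd)).
  assert (HB : Z.of_nat B = Int_part bnd).
  { unfold B. apply Z2Nat.id. destruct (base_Int_part bnd). assert (-1 < Int_part bnd)%Z by (apply lt_IZR; simpl; lra). lia. }
  set (a := K * (INR N - INR N1)).
  assert (Hapos : 0 <= a). { unfold a. apply le_INR in HNN1. nra. }
  set (filt := fun l => if Rle_dec (exp a) (lprod l) then true else false).
  exists (map (fun l => (P1 (pq l) / Q1 (pq l), / Q1 (pq l) ^ 2)) (filter filt (tup B N))).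
  split; [|split].
  -
    intros x [HF Hb]. destruct HF as (Hx & Hi & _).
    set (l := dl x N).
    assert (Hin : In l (tup B N)).
    { rewrite <- (dl_length x N). apply tup_in. apply dl_Forall_P. intros i Hi'.
      destruct (dig_props x Hx Hi i) as [D1 _]. split; auto.
      rewrite HB. apply le_Int_part. eapply Rle_trans; [apply Tmax_ge_dig; eauto|]. apply Hb; auto. }
    assert (Hf : exp a <= lprod l).
    { unfold a. rewrite <- Hth4.
      replace (/ (4 * theta) * (INR N - INR N1)) with ((INR N - INR N1) / (4 * theta)) by (unfold Rdiv; ring).
      apply (HN1 (fun n => Tmax n x) (fun n => lprod (dl x n))).
      - intro n. apply lprod_pos. apply dl_Forall; auto.
      - intros m n Hmn HT. destruct (Tmax_record x m n Hmn HT) as (k'&Hk'&Hk2).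
        eapply Rle_trans; [|apply (lprod_dl_rec x m k' n); auto].
        apply Rmult_le_compat_l; auto. pose proof (lprod_pos _ (dl_Forall x m Hx Hi)). lra.
      - auto. }
    exists (P1 (pq l) / Q1 (pq l), / Q1 (pq l) ^ 2). split.
    + apply in_map_iff. exists l. split; auto. apply filter_In. split; auto.
      unfold filt. destruct (Rle_dec (exp a) (lprod l)); auto.
    + simpl. apply pq_close; auto.
  -
    intros cr Hin. apply in_map_iff in Hin. destruct Hin as (l&<-&Hl).
    apply filter_In in Hl. destruct Hl as [Hl Hf]. unfold filt in Hf.
    destruct (Rle_dec (exp a) (lprod l)) as [Hle|]; [|discriminate].
    destruct (pq_inv l (tup_Forall B N l Hl)) as (_&Q1p&Q1l&_&_). simpl.
    assert (0 < exp a) by apply exp_pos.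
    split. { apply Rmult_lt_0_compat; [lra|]. apply Rinv_0_lt_compat. nra. }
    apply Rle_trans with (2 * / (exp a) ^ 2).
    { apply Rmult_le_compat_l; [lra|]. apply Rinv_le_contravar; [nra|]. simpl. nra. }
    assert (E1 : / exp a ^ 2 = exp (2 * K * INR N1) * exp (-2 * K) ^ N).
    { rewrite <- (exp_INR_mult a 2), <- exp_Ropp, <- exp_INR_mult, <- exp_plus.
      f_equal. unfold a. simpl INR. ring. }
    rewrite E1. rewrite Rabs_right in HNb by (left; apply pow_lt; apply exp_pos).
    apply Rmult_lt_compat_l with (r := 2 * exp (2 * K * INR N1)) in HNb.
    2:{ apply Rmult_lt_0_compat; [lra|apply exp_pos]. }
    replace (2 * exp (2 * K * INR N1) * (delta / (2 * exp (2 * K * INR N1)))) with delta in HNb.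
    2:{ field. pose proof (exp_pos (2 * K * INR N1)). lra. }
    lra.
  -
    rewrite map_map. simpl.
    set (g := fun z : Z => Rpower (IZR z) (- (2 * s'))).
    set (C := Rpower 2 s * exp (-2 * (s - s') * a)).
    apply Rle_trans with (lsum (map (fun l => C * lprodR g l) (tup B N))).
    { apply lsum_filter_le.
      - intros l Hl Hf. unfold filt in Hf. destruct (Rle_dec (exp a) (lprod l)) as [Hle|]; [|discriminate].
        destruct (pq_inv l (tup_Forall B N l Hl)) as (_&_&Q1l&_&_).
        unfold C, g. rewrite <- Rpower_lprod by (eapply tup_Forall; eauto).
        apply pw_bound; auto.
      - intros l _. unfold C. apply Rlt_le. apply Rmult_lt_0_compat.
        apply Rmult_lt_0_compat; [apply Rpower_pos|apply exp_pos].
        apply lprodR_pos. intro; apply Rpower_pos. }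
    rewrite lsum_map_mult, tup_sum.
    assert (Hg : 0 <= lsum (map g (digs B))).
    { apply lsum_nonneg. apply Forall_forall. intros y Hy. apply in_map_iff in Hy.
      destruct Hy as (z&<-&_). left. apply Rpower_pos. }
    assert (Hg2 : lsum (map g (digs B)) <= Zt) by (apply zeta_bound; auto).
    assert (HC : 0 < C) by (unfold C; apply Rmult_lt_0_compat; [apply Rpower_pos|apply exp_pos]).
    apply Rle_trans with (C * Zt ^ N).
    { apply Rmult_le_compat_l; [lra|]. apply pow_incr. lra. }
    assert (E2 : C * Zt ^ N = Rpower 2 s * exp (2 * Zt * INR N1) * (Zt * exp (-2 * Zt)) ^ N).
    { unfold C. rewrite Rpow_mult_distr, <- exp_INR_mult.
      replace (-2 * (s - s') * a) with (2 * Zt * INR N1 + -2 * Zt * INR N).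
      2:{ unfold a. rewrite <- HKZ. ring. }
      rewrite exp_plus. ring. }
    rewrite E2.
    assert (Hb2 : Zt * exp (-2 * Zt) <= 1/2).
    { assert (exp (2 * Zt) >= 2 * Zt) by (pose proof (exp_ineq1_le (2 * Zt)); lra).
      replace (-2 * Zt) with (- (2 * Zt)) by ring. rewrite exp_Ropp.
      pose proof (exp_pos (2 * Zt)).
      apply Rmult_le_reg_r with (r := exp (2 * Zt)); auto.
      rewrite Rmult_assoc, Rinv_l by lra. nra. }
    assert (Hq0 : 0 <= Zt * exp (-2 * Zt)) by (pose proof (exp_pos (-2 * Zt)); nra).
    apply Rle_trans with (Rpower 2 s * exp (2 * Zt * INR N1) * (1/2) ^ N).
    { apply Rmult_le_compat_l. left; apply Rmult_lt_0_compat; [apply Rpower_pos|apply exp_pos].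
      apply pow_incr. lra. }
    rewrite Rabs_right in HNa by (left; apply pow_lt; lra).
    assert (HC2 : 0 < Rpower 2 s * exp (2 * Zt * INR N1)) by (apply Rmult_lt_0_compat; [apply Rpower_pos|apply exp_pos]).
    apply Rmult_lt_compat_l with (r := Rpower 2 s * exp (2 * Zt * INR N1)) in HNa; auto.
    assert (X : forall c e, 0 < c -> c * (e / c) = e) by (intros; field; lra).
    rewrite X in HNa by auto. lra.
Qed.

Lemma lsum_remove_le (e : nat -> R) j L : (forall i, 0 <= e i) ->
  lsum (map e (remove Nat.eq_dec j L)) <= lsum (map e L).
Proof.
  intros He. induction L as [|a L IH]; simpl; [lra|].
  destruct (Nat.eq_dec j a); simpl; specialize (He a); lra.
Qed.

Lemma lsum_remove_in (e : nat -> R) j L : (forall i, 0 <= e i) -> In j L ->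
  e j + lsum (map e (remove Nat.eq_dec j L)) <= lsum (map e L).
Proof.
  intros He. induction L as [|a L IH]; simpl; intros H; [contradiction|].
  destruct (Nat.eq_dec j a).
  - subst. pose proof (lsum_remove_le e a L He). lra.
  - simpl. destruct H as [H|H]; [congruence|]. specialize (IH H). lra.
Qed.

Lemma cover_len (lo hi : nat -> R) : forall n (L : list nat), (length L <= n)%nat ->
  (forall i, lo i < hi i) -> forall a b,
  (forall x, a <= x <= b -> exists i, In i L /\ lo i < x < hi i) ->
  b - a <= lsum (map (fun i => hi i - lo i) L).
Proof.
  induction n as [|n IH]; intros L HL Hlh a b Hc.
  - destruct L; [|simpl in HL; lia].
    destruct (Rle_or_lt a b) as [Hab|Hab]; [|simpl; lra].
    destruct (Hc a) as (i&[]&_). lra.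
  - assert (Hnn : forall i, 0 <= hi i - lo i) by (intro i; specialize (Hlh i); lra).
    assert (Hpos : 0 <= lsum (map (fun i => hi i - lo i) L)).
    { apply lsum_nonneg. apply Forall_forall. intros y Hy. apply in_map_iff in Hy. destruct Hy as (i&<-&_). auto. }
    destruct (Rle_or_lt a b) as [Hab|Hab]; [|lra].
    destruct (Hc a) as (j&Hj&Hj1&Hj2). lra.
    pose proof (lsum_remove_in (fun i => hi i - lo i) j L Hnn Hj) as Hrem. simpl in Hrem.
    destruct (Rle_or_lt b (hi j)) as [Hb|Hb].
    + pose proof (lsum_nonneg (map (fun i => hi i - lo i) (remove Nat.eq_dec j L))). 
      assert (0 <= lsum (map (fun i => hi i - lo i) (remove Nat.eq_dec j L))).
      { apply lsum_nonneg. apply Forall_forall. intros y Hy. apply in_map_iff in Hy. destruct Hy as (i&<-&_). auto. }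
      lra.
    + assert (IH' := IH (remove Nat.eq_dec j L)).
      assert (Hlen : (length (remove Nat.eq_dec j L) <= n)%nat).
      { pose proof (remove_length_lt Nat.eq_dec L j Hj). lia. }
      specialize (IH' Hlen Hlh (hi j) b).
      assert (b - hi j <= lsum (map (fun i => hi i - lo i) (remove Nat.eq_dec j L))).
      { apply IH'. intros x Hx. destruct (Hc x) as (i&Hi&Hi1&Hi2). lra.
        exists i. split; [|lra]. apply in_in_remove; auto. intro E. subst. lra. }
      lra.
Qed.

Lemma NoDup_remove' j L : NoDup L -> NoDup (remove Nat.eq_dec j L).
Proof.
  induction 1; simpl. constructor.
  destruct (Nat.eq_dec j x); auto. constructor; auto.
  intro H1. apply in_remove in H1. tauto.
Qed.

Lemma lsum_remove_eq (e : nat -> R) j L : NoDup L -> In j L ->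
  lsum (map e L) = e j + lsum (map e (remove Nat.eq_dec j L)).
Proof.
  induction 1; simpl; intros Hin; [contradiction|].
  destruct (Nat.eq_dec j x).
  - subst. rewrite notin_remove; auto.
  - destruct Hin as [Hin|Hin]; [congruence|]. simpl. rewrite IHNoDup; auto. ring.
Qed.

Fixpoint psum (e : nat -> R) (n : nat) : R := match n with O => 0 | S n' => psum e n' + e n' end.

Lemma psum_sum e N : psum e (S N) = sum_f_R0 e N.
Proof. induction N; simpl in *; [ring|]. rewrite <- IHN. simpl. ring. Qed.

Lemma lsum_nodup_le (e : nat -> R) : (forall i, 0 <= e i) -> forall N L, NoDup L ->
  (forall i, In i L -> (i < N)%nat) -> lsum (map e L) <= psum e N.
Proof.
  intros He. induction N; intros L HL Hb.
  - destruct L; simpl; [lra|]. specialize (Hb n (or_introl eq_refl)). lia.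
  - simpl. destruct (in_dec Nat.eq_dec N L) as [HN|HN].
    + rewrite (lsum_remove_eq e N L HL HN).
      assert (lsum (map e (remove Nat.eq_dec N L)) <= psum e N).
      { apply IHN. apply NoDup_remove'; auto. intros i Hi. apply in_remove in Hi. destruct Hi.
        specialize (Hb i H). lia. }
      lra.
    + assert (lsum (map e L) <= psum e N).
      { apply IHN; auto. intros i Hi. specialize (Hb i Hi). assert (i <> N) by (intro; subst; tauto). lia. }
      specialize (He N). lra.
Qed.

Lemma list_max_bound (L : list nat) : exists N, forall i, In i L -> (i < N)%nat.
Proof.
  induction L as [|a L [N HN]]. exists 0%nat. intros i [].
  exists (S (Nat.max a N)). intros i [<-|Hi]. lia. specialize (HN i Hi). lia.
Qed.

Lemma cover_interval (V : nat -> R -> Prop) (e : nat -> R) :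
  (forall i, 0 < e i) -> (forall i u v, V i u -> V i v -> Rabs (u - v) <= e i) ->
  (forall t, 0 <= t <= 1/2 -> exists i, V i t) ->
  exists N, 1/8 <= sum_f_R0 e N.
Proof.
  intros He Hd Hc.
  set (v := fun i => match excluded_middle_informative (exists u, V i u) with
                     | left H => proj1_sig (constructive_indefinite_description _ H) | right _ => 0 end).
  assert (Hv : forall i u, V i u -> Rabs (u - v i) <= e i).
  { intros i u Hu. unfold v. destruct (excluded_middle_informative _) as [H|H].
    - destruct (constructive_indefinite_description _ H) as [w Hw]. simpl. auto.
    - exfalso; eauto. }
  set (lo := fun i => v i - 2 * e i). set (hi := fun i => v i + 2 * e i).
  assert (Hlh : forall i, lo i < hi i) by (intro i; unfold lo, hi; specialize (He i); lra).
  set (W := fun i x => lo i < x < hi i).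
  assert (HVW : forall i u, V i u -> W i u).
  { intros i u Hu. specialize (Hv i u Hu). specialize (He i). unfold W, lo, hi.
    unfold Rabs in Hv. destruct (Rcase_abs (u - v i)); lra. }
  assert (cf : forall y, (exists t, (exists i, y = INR i /\ W i t)) -> (exists i : nat, y = INR i)).
  { intros y (t&i&E&_). eauto. }
  set (fam := mkfamily (fun y => exists i : nat, y = INR i) (fun y t => exists i, y = INR i /\ W i t) cf).
  destruct (compact_P3 0 (1/2) fam) as (D&Hcov&Hfin).
  { split.
    - intros t Ht. destruct (Hc t Ht) as [i Hi]. exists (INR i). simpl. exists i. split; auto.
    - intros y t (i&E&Ht). unfold W in Ht.
      assert (Hd0 : 0 < Rmin (t - lo i) (hi i - t)) by (apply Rmin_pos; lra).
      exists (mkposreal _ Hd0). intros z Hz. unfold disc in Hz. simpl in Hz.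
      exists i. split; auto. unfold W. apply Rabs_def2 in Hz.
      pose proof (Rmin_l (t - lo i) (hi i - t)). pose proof (Rmin_r (t - lo i) (hi i - t)). lra. }
  destruct Hfin as [l Hl].
  set (Ln := map (fun y => Z.to_nat (Int_part y)) l).
  assert (HLn : forall t, 0 <= t <= 1/2 -> exists i, In i Ln /\ lo i < t < hi i).
  { intros t Ht. destruct (Hcov t Ht) as (y&(i&E&Hw)&HD). exists i. split; auto.
    unfold Ln. apply in_map_iff. exists y. split.
    - subst. rewrite Int_part_INR. apply Nat2Z.id.
    - apply Hl. simpl. split; auto. exists i; auto. }
  assert (Hlen := cover_len lo hi (length (nodup Nat.eq_dec Ln)) (nodup Nat.eq_dec Ln) (le_n _) Hlh 0 (1/2)).
  assert (H1 : 1/2 - 0 <= lsum (map (fun i => hi i - lo i) (nodup Nat.eq_dec Ln))).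
  { apply Hlen. intros x Hx. destruct (HLn x Hx) as (i&Hi&Hi2). exists i. split; auto. apply nodup_In. auto. }
  destruct (list_max_bound Ln) as [N HN].
  assert (H2 : lsum (map (fun i => hi i - lo i) (nodup Nat.eq_dec Ln)) <= psum (fun i => hi i - lo i) N).
  { apply lsum_nodup_le. intro i; specialize (Hlh i); lra. apply NoDup_nodup.
    intros i Hi. apply nodup_In in Hi. auto. }
  assert (H3 : forall n, psum (fun i => hi i - lo i) n = 4 * psum e n).
  { induction n; simpl; [ring|]. rewrite IHn. unfold hi, lo. ring. }
  exists N. rewrite <- psum_sum. simpl.
  assert (0 <= psum e N). { clear -He. induction N; simpl; [lra|]. specialize (He N). lra. }
  rewrite H3 in H2. specialize (He N). lra.
Qed.

Definition sh1 (a : nat -> Z) : nat -> Z := fun k => a (S k).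

Fixpoint fin (a : nat -> Z) (n : nat) : R :=
  match n with O => 0 | S n' => / (IZR (a O) + fin (sh1 a) n') end.

Definition good (a : nat -> Z) := forall k, (2 <= a k)%Z.

Lemma good_shift a : good a -> good (sh1 a).
Proof. intros H k. apply H. Qed.

Lemma good0 a : good a -> 2 <= IZR (a O).
Proof. intros H. apply IZR_le. apply H. Qed.

Lemma inv_range c u : 2 <= c -> 0 <= u -> 0 < / (c + u) <= 1/2.
Proof.
  intros. split. apply Rinv_0_lt_compat; lra.
  replace (1/2) with (/2) by field. apply Rinv_le_contravar; lra.
Qed.

Lemma inv_diff c u w : 2 <= c -> 0 <= u -> 0 <= w -> Rabs (/ (c + u) - / (c + w)) <= Rabs (u - w) / 4.
Proof.
  intros Hc Hu Hw.
  replace (/ (c + u) - / (c + w)) with ((w - u) / ((c + u) * (c + w))) by (field; lra).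
  unfold Rdiv. rewrite Rabs_mult, Rabs_inv by nra. rewrite (Rabs_right ((c+u)*(c+w))) by nra.
  rewrite <- Rabs_Ropp. replace (- (w - u)) with (u - w) by ring.
  pose proof (Rabs_pos (u - w)). apply Rmult_le_compat_l; auto.
  apply Rinv_le_contravar; nra.
Qed.

Lemma fin_range n : forall a, good a -> 0 <= fin a n <= 1/2.
Proof.
  induction n; intros a Ha; simpl; [lra|].
  destruct (IHn (sh1 a) (good_shift a Ha)). pose proof (inv_range _ _ (good0 a Ha) H). lra.
Qed.

Lemma fin_cauchy n : forall a m, good a -> Rabs (fin a n - fin a (n + m)) <= (/4) ^ n / 2.
Proof.
  induction n; intros a m Ha.
  - simpl. destruct (fin_range m a Ha). rewrite Rabs_left1 by lra. lra.
  - simpl. eapply Rle_trans. apply inv_diff. apply good0; auto.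
    apply fin_range; apply good_shift; auto. apply fin_range; apply good_shift; auto.
    specialize (IHn (sh1 a) m (good_shift a Ha)). lra.
Qed.

Lemma pow_le1 x k : 0 <= x <= 1 -> x ^ k <= 1.
Proof. intros H. induction k; simpl; [lra|]. assert (0 <= x ^ k) by (apply pow_le; lra). nra. Qed.

Lemma pow4_le n N : (N <= n)%nat -> (/4) ^ n <= (/4) ^ N.
Proof.
  intros H. replace n with (N + (n - N))%nat by lia. rewrite pow_add.
  assert (0 < (/4) ^ N) by (apply pow_lt; lra).
  assert ((/4) ^ (n - N) <= 1) by (apply pow_le1; lra).
  assert (0 <= (/4) ^ (n - N)) by (apply pow_le; lra). nra.
Qed.

Lemma small_le z : (forall n, z <= (/4) ^ n) -> z <= 0.
Proof.
  intros H. destruct (Rle_or_lt z 0); auto. exfalso.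
  assert (Hq : Rabs (/4) < 1) by (rewrite Rabs_right; lra).
  destruct (pow_lt_1_zero _ Hq z H0) as [N HN]. specialize (HN N (le_n _)).
  rewrite Rabs_right in HN by (left; apply pow_lt; lra). specialize (H N). lra.
Qed.

Lemma fin_Cauchy a : good a -> Cauchy_crit (fin a).
Proof.
  intros Ha eps He.
  assert (Hq : Rabs (/4) < 1) by (rewrite Rabs_right; lra).
  destruct (pow_lt_1_zero _ Hq eps He) as [N HN].
  exists N. intros n m Hn Hm. unfold R_dist.
  assert (HN' := HN N (le_n _)). rewrite Rabs_right in HN' by (left; apply pow_lt; lra).
  destruct (Nat.le_gt_cases n m).
  - replace m with (n + (m - n))%nat by lia. eapply Rle_lt_trans. apply fin_cauchy; auto.
    pose proof (pow4_le n N Hn). assert (0 < (/4)^n) by (apply pow_lt; lra). lra.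
  - rewrite Rabs_minus_sym. replace n with (m + (n - m))%nat by lia. eapply Rle_lt_trans. apply fin_cauchy; auto.
    pose proof (pow4_le m N Hm). assert (0 < (/4)^m) by (apply pow_lt; lra). lra.
Qed.

Definition X (a : nat -> Z) : R := epsilon (inhabits 0) (fun l => Un_cv (fin a) l).

Lemma X_cv a : good a -> Un_cv (fin a) (X a).
Proof.
  intros Ha. unfold X. apply epsilon_spec. destruct (R_complete _ (fin_Cauchy a Ha)) as [l Hl]. eauto.
Qed.

Lemma lim_close (u : nat -> R) l c b n : Un_cv u l -> (forall m, Rabs (c - u (n + m)%nat) <= b) -> Rabs (c - l) <= b.
Proof.
  intros Hu H. destruct (Rle_or_lt (Rabs (c - l)) b); auto. exfalso.
  destruct (Hu (Rabs (c - l) - b)) as [N HN]. lra.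
  specialize (HN (n + N)%nat ltac:(lia)). specialize (H N). unfold R_dist in HN.
  pose proof (Rabs_triang (c - u (n + N)%nat) (u (n + N)%nat - l)).
  replace (c - u (n + N)%nat + (u (n + N)%nat - l)) with (c - l) in H1 by ring. lra.
Qed.

Lemma X_approx a n : good a -> Rabs (fin a n - X a) <= (/4) ^ n / 2.
Proof. intros Ha. apply (lim_close (fin a) (X a) _ _ n (X_cv a Ha)). intro m. apply fin_cauchy; auto. Qed.

Lemma X_range a : good a -> 0 <= X a <= 1/2.
Proof.
  intros Ha. split.
  - assert (- X a <= 0); [|lra]. apply small_le. intro n.
    pose proof (X_approx a n Ha). pose proof (fin_range n a Ha).
    assert (0 < (/4)^n) by (apply pow_lt; lra).
    unfold Rabs in H; destruct Rcase_abs in H; lra.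
  - assert (X a - 1/2 <= 0); [|lra]. apply small_le. intro n.
    pose proof (X_approx a n Ha). pose proof (fin_range n a Ha).
    assert (0 < (/4)^n) by (apply pow_lt; lra).
    unfold Rabs in H; destruct Rcase_abs in H; lra.
Qed.

Lemma X_rel a : good a -> X a = / (IZR (a O) + X (sh1 a)).
Proof.
  intros Ha. apply Rminus_diag_uniq.
  assert (Rabs (X a - / (IZR (a O) + X (sh1 a))) <= 0); [|match goal with H : Rabs ?z <= 0 |- _ => unfold Rabs in H; destruct (Rcase_abs z); lra end].
  apply small_le. intro n.
  pose proof (X_approx a (S n) Ha) as H1. simpl in H1.
  pose proof (X_approx (sh1 a) n (good_shift a Ha)) as H2.
  pose proof (inv_diff (IZR (a O)) (fin (sh1 a) n) (X (sh1 a)) (good0 a Ha)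
     (proj1 (fin_range n _ (good_shift a Ha))) (proj1 (X_range _ (good_shift a Ha)))) as H3.
  pose proof (Rabs_triang (X a - / (IZR (a O) + fin (sh1 a) n)) (/ (IZR (a O) + fin (sh1 a) n) - / (IZR (a O) + X (sh1 a)))).
  replace (X a - / (IZR (a O) + fin (sh1 a) n) + (/ (IZR (a O) + fin (sh1 a) n) - / (IZR (a O) + X (sh1 a))))
    with (X a - / (IZR (a O) + X (sh1 a))) in H by ring.
  rewrite Rabs_minus_sym in H1.
  assert (0 < (/4)^n) by (apply pow_lt; lra). lra.
Qed.

Lemma X_pos a : good a -> 0 < X a <= 1/2.
Proof.
  intros Ha. rewrite X_rel by auto. apply inv_range. apply good0; auto. apply X_range. apply good_shift; auto.
Qed.

Lemma gauss_X a : good a -> gauss (X a) = X (sh1 a) /\ Int_part (/ X a) = a O.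
Proof.
  intros Ha. pose proof (X_rel a Ha) as E. pose proof (X_pos (sh1 a) (good_shift a Ha)).
  pose proof (good0 a Ha).
  assert (E2 : / X a = IZR (a O) + X (sh1 a)) by (rewrite E, Rinv_inv; auto).
  assert (Ei : Int_part (/ X a) = a O) by (rewrite E2; apply Int_part_eq; lra).
  split; auto. unfold gauss. rewrite Ei, E2. ring.
Qed.

Definition shiftn (k : nat) (a : nat -> Z) : nat -> Z := Nat.iter k sh1 a.

Lemma shiftn_val k a i : shiftn k a i = a (k + i)%nat.
Proof.
  revert i. induction k; intro i; simpl; auto. unfold shiftn in *. simpl. unfold sh1 at 1.
  rewrite IHk. f_equal. lia.
Qed.

Lemma good_shiftn k a : good a -> good (shiftn k a).
Proof. intros H i. rewrite shiftn_val. apply H. Qed.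

Lemma tail_X a k : good a -> ctail k (X a) = X (shiftn k a).
Proof.
  intros Ha. induction k; [reflexivity|]. rewrite tail_S, IHk.
  destruct (gauss_X (shiftn k a) (good_shiftn k a Ha)). auto.
Qed.

Lemma dig_X a k : good a -> dig k (X a) = a k.
Proof.
  intros Ha. unfold dig. rewrite tail_X by auto. destruct (gauss_X (shiftn k a) (good_shiftn k a Ha)) as [_ H].
  rewrite H, shiftn_val. f_equal. lia.
Qed.

Lemma tails_irr x : (forall k, 0 < ctail k x < 1) -> irrational x.
Proof.
  intros H p q Hq E.
  assert (H0 : exists u v : Z, (0 < v)%Z /\ x = IZR u / IZR v).
  { destruct (Z_lt_le_dec 0 q). exists p, q. auto.
    exists (-p)%Z, (-q)%Z. split. lia. rewrite E, !opp_IZR. field. apply not_0_IZR. auto. }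
  destruct H0 as (u0&v0&Hv0&E0).
  assert (Cl : forall k, exists u v : Z, (0 < v)%Z /\ (v + Z.of_nat k <= v0)%Z /\ ctail k x = IZR u / IZR v).
  { induction k.
    - exists u0, v0. split; auto. split. lia. auto.
    - destruct IHk as (u&v&Hv&Hvk&Et). pose proof (H k) as [T1 T2]. rewrite Et in T1, T2.
      assert (Hvr : 0 < IZR v) by (apply IZR_lt; auto).
      assert (Hu : (0 < u)%Z). { apply lt_IZR. unfold Rdiv in T1. apply Rmult_lt_reg_r with (/ IZR v).
        apply Rinv_0_lt_compat; auto. lra. }
      assert (Huv : (u < v)%Z). { apply lt_IZR. apply Rmult_lt_reg_r with (/ IZR v).
        apply Rinv_0_lt_compat; auto. rewrite Rinv_r by lra. auto. }
      assert (Hur : 0 < IZR u) by (apply IZR_lt; auto).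
      exists (v - Int_part (IZR v / IZR u) * u)%Z, u. split; auto. split. rewrite Nat2Z.inj_succ. lia.
      rewrite tail_S, Et. unfold gauss. rewrite minus_IZR, mult_IZR.
      replace (/ (IZR u / IZR v)) with (IZR v / IZR u) by (field; lra). field. lra. }
  destruct (Cl (Z.to_nat v0)) as (u&v&Hv&Hvk&_). rewrite Z2Nat.id in Hvk by lia. lia.
Qed.

Lemma X_in a : good a -> 0 < X a < 1 /\ irrational (X a).
Proof.
  intros Ha. pose proof (X_pos a Ha). split; [lra|]. apply tails_irr. intro k.
  rewrite tail_X by auto. pose proof (X_pos _ (good_shiftn k a Ha)). lra.
Qed.

Lemma gap0_lt a b : good a -> good b -> (a O < b O)%Z ->
  / (2 * ((IZR (a O) + 1) * (IZR (b O) + 1))) <= Rabs (X a - X b).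
Proof.
  intros Ha Hb Hab.
  rewrite (X_rel a Ha), (X_rel b Hb).
  pose proof (X_pos _ (good_shift a Ha)) as [U1 U2]. pose proof (X_pos _ (good_shift b Hb)) as [V1 V2].
  set (u := X (sh1 a)) in *. set (v := X (sh1 b)) in *.
  pose proof (good0 a Ha). pose proof (good0 b Hb).
  assert (Hab' : IZR (a O) + 1 <= IZR (b O)) by (rewrite <- plus_IZR; apply IZR_le; lia).
  set (ca := IZR (a O)) in *. set (cb := IZR (b O)) in *.
  replace (/ (ca + u) - / (cb + v)) with ((cb + v - ca - u) / ((ca + u) * (cb + v))) by (field; lra).
  assert (Hd : 0 < (ca + u) * (cb + v)) by nra.
  rewrite Rabs_right.
  2:{ apply Rle_ge. unfold Rdiv. apply Rmult_le_pos; [lra|]. left; apply Rinv_0_lt_compat; auto. }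
  apply Rle_trans with ((1/2) / ((ca + u) * (cb + v))).
  - unfold Rdiv. rewrite Rmult_1_l. replace (/ (2 * ((ca + 1) * (cb + 1)))) with (/2 * / ((ca + 1) * (cb + 1))) by (field; lra).
    apply Rmult_le_compat_l; [lra|]. apply Rinv_le_contravar; auto. nra.
  - unfold Rdiv. apply Rmult_le_compat_r. left; apply Rinv_0_lt_compat; auto. lra.
Qed.

Lemma gap0 a b : good a -> good b -> a O <> b O ->
  / (2 * ((IZR (a O) + 1) * (IZR (b O) + 1))) <= Rabs (X a - X b).
Proof.
  intros Ha Hb Hab. destruct (Z_lt_le_dec (a O) (b O)).
  - apply gap0_lt; auto.
  - rewrite Rabs_minus_sym, (Rmult_comm (IZR (a O) + 1)). apply gap0_lt; auto. lia.
Qed.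

Lemma gap_step a b : good a -> good b -> a O = b O ->
  Rabs (X (sh1 a) - X (sh1 b)) / (IZR (a O) + 1) ^ 2 <= Rabs (X a - X b).
Proof.
  intros Ha Hb Hab.
  rewrite (X_rel a Ha), (X_rel b Hb), <- Hab.
  pose proof (X_pos _ (good_shift a Ha)) as [U1 U2]. pose proof (X_pos _ (good_shift b Hb)) as [V1 V2].
  set (u := X (sh1 a)) in *. set (v := X (sh1 b)) in *.
  pose proof (good0 a Ha). set (c := IZR (a O)) in *.
  replace (/ (c + u) - / (c + v)) with ((v - u) / ((c + u) * (c + v))) by (field; lra).
  assert (Hd : 0 < (c + u) * (c + v)) by nra.
  unfold Rdiv. rewrite Rabs_mult, Rabs_inv, (Rabs_right ((c + u) * (c + v))) by lra.
  rewrite Rabs_minus_sym. apply Rmult_le_compat_l. apply Rabs_pos.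
  apply Rinv_le_contravar; auto. simpl. nra.
Qed.

Fixpoint Pr (A : nat -> Z) (n : nat) : R :=
  match n with O => 1 | S n' => (IZR (A O) + 1) ^ 2 * Pr (sh1 A) n' end.

Lemma Pr_pos A n : (forall i, (0 <= A i)%Z) -> 1 <= Pr A n.
Proof.
  revert A. induction n; intros A H; simpl; [lra|].
  assert (0 <= IZR (A O)) by (apply IZR_le; auto).
  assert (1 <= Pr (sh1 A) n) by (apply IHn; intro; apply H). nra.
Qed.

Lemma Pr_S A n : Pr A (S n) = Pr A n * (IZR (A n) + 1) ^ 2.
Proof.
  revert A. induction n; intros A; simpl. ring.
  simpl in IHn. rewrite IHn. unfold sh1. ring.
Qed.

Lemma gap_n n : forall a b A, good a -> good b -> (forall i, (a i <= A i)%Z) -> (forall i, (b i <= A i)%Z) ->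
  (forall i, (i < n)%nat -> a i = b i) -> a n <> b n ->
  / (2 * Pr A (S n)) <= Rabs (X a - X b).
Proof.
  induction n; intros a b A Ha Hb HA HB Heq Hne.
  - eapply Rle_trans; [|apply gap0; auto]. simpl.
    pose proof (good0 a Ha). pose proof (good0 b Hb).
    assert (IZR (a O) <= IZR (A O)) by (apply IZR_le; auto).
    assert (IZR (b O) <= IZR (A O)) by (apply IZR_le; auto).
    apply Rinv_le_contravar. nra. nra.
  - assert (H0 : a O = b O) by (apply Heq; lia).
    eapply Rle_trans; [|apply gap_step; auto].
    specialize (IHn (sh1 a) (sh1 b) (sh1 A) (good_shift a Ha) (good_shift b Hb)
      (fun i => HA (S i)) (fun i => HB (S i)) (fun i Hi => Heq (S i) ltac:(lia)) Hne).
    pose proof (good0 a Ha). assert (IZR (a O) <= IZR (A O)) by (apply IZR_le; auto).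
    assert (HP : 1 <= Pr (sh1 A) (S n)).
    { apply Pr_pos. intro i. unfold sh1. specialize (HA (S i)). specialize (Ha (S i)). lia. }
    change (Pr A (S (S n))) with ((IZR (A O) + 1) ^ 2 * Pr (sh1 A) (S n)).
    apply Rle_trans with (/ (2 * Pr (sh1 A) (S n)) / (IZR (a O) + 1) ^ 2).
    + unfold Rdiv. replace (/ (2 * ((IZR (A O) + 1) ^ 2 * Pr (sh1 A) (S n)))) with
        (/ (2 * Pr (sh1 A) (S n)) * / (IZR (A O) + 1) ^ 2) by (field; split; nra).
      apply Rmult_le_compat_l. left. apply Rinv_0_lt_compat. lra.
      apply Rinv_le_contravar. nra. apply pow_incr. lra.
    + unfold Rdiv. apply Rmult_le_compat_r; auto. left. apply Rinv_0_lt_compat. nra.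
Qed.

Fixpoint rr (m : nat -> Z) (t : R) (n : nat) : R :=
  match n with O => t | S n' => frac_part (rr m t n' * IZR (m n')) end.
Definition jj (m : nat -> Z) (t : R) (n : nat) : Z := Int_part (rr m t n * IZR (m n)).
Fixpoint Mp (m : nat -> Z) (n : nat) : R := match n with O => 1 | S n' => Mp m n' * IZR (m n') end.

Lemma rr_range m t n : 0 <= t < 1 -> 0 <= rr m t n < 1.
Proof. intros H. destruct n; simpl; auto. destruct (base_fp (rr m t n * IZR (m n))). lra. Qed.

Lemma jj_range m t n : (forall i, (2 <= m i)%Z) -> 0 <= t < 1 -> (0 <= jj m t n <= m n - 1)%Z.
Proof.
  intros Hm Ht. unfold jj. pose proof (rr_range m t n Ht). assert (2 <= IZR (m n)) by (apply IZR_le; auto).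
  destruct (base_Int_part (rr m t n * IZR (m n))) as [B1 B2]. split.
  - assert (-1 < Int_part (rr m t n * IZR (m n)))%Z; [|lia]. apply lt_IZR. simpl. nra.
  - assert (Int_part (rr m t n * IZR (m n)) < m n)%Z; [|lia]. apply lt_IZR. nra.
Qed.

Lemma rr_S m t n : rr m t (S n) = rr m t n * IZR (m n) - IZR (jj m t n).
Proof. reflexivity. Qed.

Lemma Mp_pos m n : (forall i, (2 <= m i)%Z) -> 0 < Mp m n.
Proof. intros H. induction n; simpl; [lra|]. assert (2 <= IZR (m n)) by (apply IZR_le; auto). nra. Qed.

Lemma Mp_ge m n : (forall i, (2 <= m i)%Z) -> 2 ^ n <= Mp m n.
Proof. intros H. induction n; simpl; [lra|]. assert (2 <= IZR (m n)) by (apply IZR_le; auto).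
  assert (0 < 2 ^ n) by (apply pow_lt; lra). nra. Qed.

Lemma rr_diff m t t' n : (forall i, (2 <= m i)%Z) -> (forall i, (i < n)%nat -> jj m t i = jj m t' i) ->
  t - t' = (rr m t n - rr m t' n) / Mp m n.
Proof.
  intros Hm. induction n; intros H.
  - simpl. field.
  - rewrite IHn by (intros; apply H; lia). rewrite !rr_S, (H n) by lia. simpl.
    assert (2 <= IZR (m n)) by (apply IZR_le; auto). pose proof (Mp_pos m n Hm).
    field. lra.
Qed.

Lemma small_le2 z : (forall n, z <= (/2) ^ n) -> z <= 0.
Proof.
  intros H. destruct (Rle_or_lt z 0); auto. exfalso.
  assert (Hq : Rabs (/2) < 1) by (rewrite Rabs_right; lra).
  destruct (pow_lt_1_zero _ Hq z H0) as [N HN]. specialize (HN N (le_n _)).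
  rewrite Rabs_right in HN by (left; apply pow_lt; lra). specialize (H N). lra.
Qed.

Lemma Rpower_le_base' a b c : 0 <= c -> 0 < a -> a <= b -> Rpower a c <= Rpower b c.
Proof. intros. apply Rle_Rpower_l; auto. Qed.

Lemma holder (A m : nat -> Z) (s rho : R) :
  0 < s -> 0 < rho ->
  (forall i, (2 <= m i)%Z) -> (forall i, (2 <= A i - m i + 1)%Z) ->
  (forall n, rho <= Mp m n * Rpower (/ (2 * Pr A (S n))) s) ->
  forall t t', 0 <= t < 1 -> 0 <= t' < 1 -> t <> t' ->
  0 < Rabs (X (fun i => A i - jj m t i)%Z - X (fun i => A i - jj m t' i)%Z) /\
  Rabs (t - t') <= / rho * Rpower (Rabs (X (fun i => A i - jj m t i)%Z - X (fun i => A i - jj m t' i)%Z)) s.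
Proof.
  intros Hs Hrho Hm HA Hrh t t' Ht Ht' Hne.
  set (a := fun i => (A i - jj m t i)%Z). set (b := fun i => (A i - jj m t' i)%Z).
  assert (Ga : good a). { intro i. unfold a. pose proof (jj_range m t i Hm Ht). specialize (HA i). lia. }
  assert (Gb : good b). { intro i. unfold b. pose proof (jj_range m t' i Hm Ht'). specialize (HA i). lia. }
  assert (Ba : forall i, (a i <= A i)%Z). { intro i. unfold a. pose proof (jj_range m t i Hm Ht). lia. }
  assert (Bb : forall i, (b i <= A i)%Z). { intro i. unfold b. pose proof (jj_range m t' i Hm Ht'). lia. }
  assert (HA0 : forall i, (0 <= A i)%Z). { intro i. specialize (HA i). specialize (Hm i). lia. }
  destruct (classic (exists n, jj m t n <> jj m t' n)) as [Hex|Hnex].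
  2:{ exfalso. apply Hne. apply Rminus_diag_uniq.
      assert (Heq : forall n, jj m t n = jj m t' n).
      { intro n. destruct (Z.eq_dec (jj m t n) (jj m t' n)); auto. exfalso; eauto. }
      assert (Rabs (t - t') <= 0).
      { apply small_le2. intro n. rewrite (rr_diff m t t' n Hm (fun i _ => Heq i)).
        pose proof (rr_range m t n Ht). pose proof (rr_range m t' n Ht').
        pose proof (Mp_pos m n Hm). pose proof (Mp_ge m n Hm).
        unfold Rdiv. rewrite Rabs_mult, Rabs_inv, (Rabs_right (Mp m n)) by lra.
        assert (Rabs (rr m t n - rr m t' n) <= 1) by (unfold Rabs; destruct Rcase_abs; lra).
        rewrite <- Rinv_pow by lra.
        apply Rle_trans with (1 * / Mp m n). apply Rmult_le_compat_r; auto. left; apply Rinv_0_lt_compat; lra.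
        rewrite Rmult_1_l. apply Rinv_le_contravar; auto. apply pow_lt; lra. }
      unfold Rabs in H; destruct Rcase_abs in H; lra. }
  destruct (dec_inh_nat_subset_has_unique_least_element (fun n => jj m t n <> jj m t' n)) as (n&(Hn1&Hn2)&_).
  { intro n. destruct (Z.eq_dec (jj m t n) (jj m t' n)); [right; auto|left; auto]. }
  { auto. }
  assert (Hbefore : forall i, (i < n)%nat -> jj m t i = jj m t' i).
  { intros i Hi. destruct (Z.eq_dec (jj m t i) (jj m t' i)); auto. specialize (Hn2 i n0). lia. }
  assert (Hab : forall i, (i < n)%nat -> a i = b i) by (intros i Hi; unfold a, b; rewrite Hbefore; auto).
  assert (Habn : a n <> b n) by (unfold a, b; lia).
  pose proof (gap_n n a b A Ga Gb Ba Bb Hab Habn) as Hgap.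
  assert (HPr : 1 <= Pr A (S n)) by (apply Pr_pos; auto).
  assert (Hg0 : 0 < / (2 * Pr A (S n))) by (apply Rinv_0_lt_compat; lra).
  split; [lra|].
  rewrite (rr_diff m t t' n Hm Hbefore).
  pose proof (rr_range m t n Ht). pose proof (rr_range m t' n Ht'). pose proof (Mp_pos m n Hm).
  unfold Rdiv. rewrite Rabs_mult, Rabs_inv, (Rabs_right (Mp m n)) by lra.
  assert (Rabs (rr m t n - rr m t' n) <= 1) by (unfold Rabs; destruct Rcase_abs; lra).
  apply Rle_trans with (/ Mp m n).
  { rewrite <- (Rmult_1_l (/ Mp m n)) at 2. apply Rmult_le_compat_r; auto. left; apply Rinv_0_lt_compat; lra. }
  pose proof (Rpower_le_base' _ _ s (Rlt_le _ _ Hs) Hg0 Hgap) as HRp.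
  specialize (Hrh n).
  apply Rle_trans with (/ rho * Rpower (/ (2 * Pr A (S n))) s).
  2:{ apply Rmult_le_compat_l; auto. left; apply Rinv_0_lt_compat; auto. }
  apply Rmult_le_reg_l with (r := rho * Mp m n). nra.
  replace (rho * Mp m n * / Mp m n) with rho by (field; lra).
  replace (rho * Mp m n * (/ rho * Rpower (/ (2 * Pr A (S n))) s)) with (Mp m n * Rpower (/ (2 * Pr A (S n))) s) by (field; lra).
  auto.
Qed.

Lemma Tmax_le n x M : 0 <= M -> (forall i, (i < n)%nat -> IZR (dig i x) <= M) -> Tmax n x <= M.
Proof.
  intros HM. induction n; intros H; simpl; auto. rewrite cf_digit_dig.
  apply Rmax_lub. apply IHn. intros; apply H; lia. apply H; lia.
Qed.

Lemma sqrt_INR_ge r n : 0 <= r -> r * r <= INR n -> r <= sqrt (INR n).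
Proof. intros. rewrite <- (sqrt_square r) by lra. apply sqrt_le_1_alt. auto. Qed.

Lemma sqrt_INR_mono i n : (i <= n)%nat -> sqrt (INR i) <= sqrt (INR n).
Proof. intros. apply sqrt_le_1_alt. apply le_INR. auto. Qed.

Lemma sqrt_S_le n : sqrt (INR (S n)) <= sqrt (INR n) + 1.
Proof.
  pose proof (sqrt_pos (INR n)). rewrite <- (sqrt_square (sqrt (INR n) + 1)) by lra.
  apply sqrt_le_1_alt. rewrite S_INR. pose proof (sqrt_sqrt (INR n) (pos_INR n)). nra.
Qed.

Lemma exp1_ge2 : 2 <= exp 1.
Proof. pose proof (exp_ineq1 1). lra. Qed.

Lemma params alpha s : 0 < alpha -> 0 < s < 1/2 ->
  exists (A m : nat -> Z) (n0 : nat),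
    (forall i, (2 <= m i)%Z) /\ (forall i, (2 <= A i - m i + 1)%Z) /\
    (forall n, (n0 <= n)%nat -> Rpower (IZR (A (S n)) + 1) (2 * s) <= IZR (m n)) /\
    (forall x, (forall i, (A i - m i + 1 <= dig i x <= A i)%Z) ->
       Un_cv (fun n => Tmax (S n) x / exp (Rpower (INR (S n)) (1/2))) alpha).
Proof.
  intros Ha Hs.
  set (tau := s + 1/2).
  assert (Htau : 2 * s < tau < 1) by (unfold tau; lra).
  assert (Hln2 : 0 < ln 2) by (rewrite <- ln_1; apply ln_increasing; lra).
  set (Rs := 1 / tau + Rabs (ln (2 / alpha)) / (1 - tau) + Rabs (ln (6 / alpha)) +
             (ln 2 + 2 * s * (Rabs (ln (alpha + 1)) + 1)) / (1/2 - s) + 1).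
  assert (HRs : 1 / tau <= Rs /\ Rabs (ln (2 / alpha)) / (1 - tau) <= Rs /\ Rabs (ln (6 / alpha)) <= Rs /\
     (ln 2 + 2 * s * (Rabs (ln (alpha + 1)) + 1)) / (1/2 - s) <= Rs /\ 0 <= Rs).
  { unfold Rs. pose proof (Rabs_pos (ln (2 / alpha))). pose proof (Rabs_pos (ln (6 / alpha))).
    pose proof (Rabs_pos (ln (alpha + 1))).
    assert (0 <= 1 / tau) by (apply Rlt_le, Rdiv_lt_0_compat; lra).
    assert (0 <= Rabs (ln (2 / alpha)) / (1 - tau)) by (apply Rmult_le_pos; [auto|left; apply Rinv_0_lt_compat; lra]).
    assert (0 <= (ln 2 + 2 * s * (Rabs (ln (alpha + 1)) + 1)) / (1/2 - s)).
    { apply Rmult_le_pos; [nra|left; apply Rinv_0_lt_compat; lra]. }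
    lra. }
  destruct HRs as (R1&R2&R3&R4&R5).
  assert (Big : forall sq, Rs <= sq ->
     2 <= exp (tau * sq) /\ 3 <= alpha * exp sq - exp (tau * sq) /\
     exp (2 * s * (ln (alpha + 1) + sq + 1)) <= exp (tau * sq) - 1).
  { intros sq Hsq.
    assert (F1 : 1 <= tau * sq).
    { assert (1 / tau <= sq) by lra. unfold Rdiv in H. rewrite Rmult_1_l in H.
      apply Rmult_le_compat_l with (r := tau) in H; [|lra]. rewrite Rinv_r in H by lra. lra. }
    assert (F2 : exp ((tau - 1) * sq) <= alpha / 2).
    { assert (Rabs (ln (2 / alpha)) <= (1 - tau) * sq).
      { assert (Rabs (ln (2 / alpha)) / (1 - tau) <= sq) by lra.
        apply Rmult_le_compat_l with (r := 1 - tau) in H; [|lra].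
        replace ((1 - tau) * (Rabs (ln (2 / alpha)) / (1 - tau))) with (Rabs (ln (2 / alpha))) in H by (field; lra). auto. }
      assert (ln (2 / alpha) <= (1 - tau) * sq) by (pose proof (Rle_abs (ln (2/alpha))); lra).
      rewrite <- (exp_ln (alpha / 2)) by lra. apply exp_le.
      replace (alpha / 2) with (/ (2 / alpha)) by (field; lra). rewrite ln_Rinv by (apply Rdiv_lt_0_compat; lra). lra. }
    assert (F3 : 6 / alpha <= exp sq).
    { rewrite <- (exp_ln (6 / alpha)) by (apply Rdiv_lt_0_compat; lra). apply exp_le.
      pose proof (Rle_abs (ln (6 / alpha))). lra. }
    assert (F4 : ln 2 + 2 * s * (ln (alpha + 1) + 1) <= (1/2 - s) * sq).
    { assert ((ln 2 + 2 * s * (Rabs (ln (alpha + 1)) + 1)) / (1/2 - s) <= sq) by lra.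
      apply Rmult_le_compat_l with (r := 1/2 - s) in H; [|lra].
      replace ((1/2 - s) * ((ln 2 + 2 * s * (Rabs (ln (alpha + 1)) + 1)) / (1/2 - s))) with
        (ln 2 + 2 * s * (Rabs (ln (alpha + 1)) + 1)) in H by (field; lra).
      pose proof (Rle_abs (ln (alpha + 1))). nra. }
    assert (E1 : exp (tau * sq) = exp sq * exp ((tau - 1) * sq)) by (rewrite <- exp_plus; f_equal; ring).
    assert (G1 : 2 <= exp (tau * sq)).
    { eapply Rle_trans; [apply exp1_ge2|]. apply exp_le. lra. }
    split; [auto|split].
    - rewrite E1. assert (0 < exp sq) by apply exp_pos.
      assert (exp sq * (alpha / 2) >= 3).
      { apply Rle_ge. apply Rle_trans with (6 / alpha * (alpha / 2)). right; field; lra.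
        apply Rmult_le_compat_r; lra. }
      nra.
    - apply Rle_trans with (exp (tau * sq - ln 2)).
      + apply exp_le. unfold tau in *. nra.
      + rewrite Rminus_def, exp_plus, exp_Ropp, exp_ln by lra. lra. }
  destruct (nat_above (Rs * Rs)) as [n0 Hn0].
  assert (Hsqi : forall i, (n0 <= i)%nat -> Rs <= sqrt (INR (S i))).
  { intros i Hi. apply sqrt_INR_ge; auto. apply Rle_trans with (INR n0); auto. apply le_INR. lia. }
  set (A := fun i => if Nat.ltb i n0 then 3%Z else Int_part (alpha * exp (sqrt (INR (S i))))).
  set (m := fun i => if Nat.ltb i n0 then 2%Z else Int_part (exp (tau * sqrt (INR (S i))))).
  assert (HAi : forall i, (n0 <= i)%nat -> A i = Int_part (alpha * exp (sqrt (INR (S i))))).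
  { intros i Hi. unfold A. destruct (Nat.ltb_spec i n0); auto. lia. }
  assert (Hmi : forall i, (n0 <= i)%nat -> m i = Int_part (exp (tau * sqrt (INR (S i))))).
  { intros i Hi. unfold m. destruct (Nat.ltb_spec i n0); auto. lia. }
  assert (Hlarge : forall i, (n0 <= i)%nat ->
     IZR (A i) <= alpha * exp (sqrt (INR (S i))) /\ alpha * exp (sqrt (INR (S i))) - 1 < IZR (A i) /\
     IZR (m i) <= exp (tau * sqrt (INR (S i))) /\ exp (tau * sqrt (INR (S i))) - 1 < IZR (m i)).
  { intros i Hi. rewrite HAi, Hmi by auto.
    destruct (base_Int_part (alpha * exp (sqrt (INR (S i))))).
    destruct (base_Int_part (exp (tau * sqrt (INR (S i))))). lra. }
  exists A, m, n0. split; [|split; [|split]].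
  - intro i. destruct (Nat.lt_ge_cases i n0).
    + unfold m. destruct (Nat.ltb_spec i n0); [lia|lia].
    + destruct (Big _ (Hsqi i H)) as (B1&_&_). destruct (Hlarge i H) as (_&_&_&L4).
      apply lt_IZR in L4 || idtac. assert (1 < IZR (m i)) by lra. apply lt_IZR in H0. lia.
  - intro i. destruct (Nat.lt_ge_cases i n0).
    + unfold A, m. destruct (Nat.ltb_spec i n0); lia.
    + destruct (Big _ (Hsqi i H)) as (_&B2&_). destruct (Hlarge i H) as (L1&L2&L3&L4).
      assert (1 < IZR (A i - m i + 1)) by (rewrite plus_IZR, minus_IZR; simpl; lra).
      apply lt_IZR in H0. lia.
  - intros n Hn. set (sq := sqrt (INR (S n))).
    destruct (Big _ (Hsqi n Hn)) as (_&_&B3). fold sq in B3.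
    destruct (Hlarge n Hn) as (_&_&_&L4). fold sq in L4.
    destruct (Hlarge (S n) ltac:(lia)) as (L1&_&_&_).
    pose proof (sqrt_S_le (S n)) as Hsq1. fold sq in Hsq1.
    apply Rle_trans with (Rpower ((alpha + 1) * exp (sq + 1)) (2 * s)).
    + apply Rle_Rpower_l. lra. split.
      * assert (0 <= IZR (A (S n))). { apply IZR_le. rewrite HAi by lia. apply le_Int_part. left. apply Rmult_lt_0_compat; [lra|apply exp_pos]. }
        lra.
      * assert (exp (sqrt (INR (S (S n)))) <= exp (sq + 1)) by (apply exp_le; auto).
        assert (1 <= exp (sq + 1)). { pose proof (sqrt_pos (INR (S n))) as Hp. fold sq in Hp. apply Rle_trans with (exp 0); [rewrite exp_0; lra|apply exp_le; lra]. }
        nra.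
    + unfold Rpower. rewrite ln_mult by (try lra; apply exp_pos). rewrite ln_exp.
      eapply Rle_trans; [|left; apply L4]. replace (2 * s * (ln (alpha + 1) + (sq + 1))) with (2 * s * (ln (alpha + 1) + sq + 1)) by ring.
      auto.
  - intros x Hx eps Heps.
    destruct (nat_above (Rs * Rs + (Rabs (ln eps) / (1 - tau)) * (Rabs (ln eps) / (1 - tau)))) as [N HN].
    exists (Nat.max N n0). intros n Hn. unfold R_dist. rewrite Rpower_half_sqrt.
    set (sq := sqrt (INR (S n))).
    assert (Hnn0 : (n0 <= n)%nat) by lia.
    assert (Hq : Rabs (ln eps) / (1 - tau) <= sq).
    { apply sqrt_INR_ge. apply Rmult_le_pos; [apply Rabs_pos|left; apply Rinv_0_lt_compat; lra].
      apply Rle_trans with (INR N). assert (0 <= Rs * Rs) by nra. lra. apply le_INR. lia. }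
    destruct (Big _ (Hsqi n Hnn0)) as (B1&B2&_). fold sq in B1, B2.
    destruct (Hlarge n Hnn0) as (L1&L2&L3&L4). fold sq in L1, L2, L3, L4.
    assert (Hup : Tmax (S n) x <= alpha * exp sq).
    { apply Tmax_le. pose proof (exp_pos sq). nra.
      intros i Hi. destruct (Hx i) as [_ Hxi]. apply IZR_le in Hxi. eapply Rle_trans; [apply Hxi|].
      destruct (Nat.lt_ge_cases i n0).
      - unfold A. destruct (Nat.ltb_spec i n0); [|lia]. 
        destruct (Big _ (Hsqi n0 (le_n _))) as (C1&C2&_).
        assert (exp (sqrt (INR (S n0))) <= exp sq) by (apply exp_le; apply sqrt_INR_mono; lia).
        assert (exp (tau * sqrt (INR (S n0))) > 0) by apply exp_pos. nra.
      - destruct (Hlarge i H) as (M1&_&_&_). eapply Rle_trans; [apply M1|].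
        apply Rmult_le_compat_l; [lra|]. apply exp_le. apply sqrt_INR_mono. lia. }
    assert (Hlow : alpha * exp sq - exp (tau * sq) < Tmax (S n) x).
    { eapply Rlt_le_trans; [|apply (Tmax_ge_dig x n (S n)); lia].
      destruct (Hx n) as [Hxn _]. apply IZR_le in Hxn. rewrite plus_IZR, minus_IZR in Hxn. simpl in Hxn. lra. }
    assert (Hsmall : exp ((tau - 1) * sq) <= eps).
    { rewrite <- (exp_ln eps) by auto. apply exp_le.
      assert (Rabs (ln eps) <= (1 - tau) * sq).
      { apply Rmult_le_compat_l with (r := 1 - tau) in Hq; [|lra].
        replace ((1 - tau) * (Rabs (ln eps) / (1 - tau))) with (Rabs (ln eps)) in Hq by (field; lra). auto. }
      pose proof (Rle_abs (- ln eps)). rewrite Rabs_Ropp in H0. lra. }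
    assert (E1 : exp (tau * sq) = exp sq * exp ((tau - 1) * sq)) by (rewrite <- exp_plus; f_equal; ring).
    assert (Hes : 0 < exp sq) by apply exp_pos.
    set (T := Tmax (S n) x) in *.
    assert (Hd1 : T / exp sq <= alpha).
    { apply Rmult_le_reg_r with (exp sq); auto. unfold Rdiv. rewrite Rmult_assoc, Rinv_l by lra. lra. }
    assert (Hd2 : alpha - exp ((tau - 1) * sq) < T / exp sq).
    { apply Rmult_lt_reg_r with (exp sq); auto. unfold Rdiv. rewrite Rmult_assoc, Rinv_l by lra. nra. }
    rewrite Rabs_left1 by lra. lra.
Qed.

Fixpoint minR (R0 : nat -> R) (k : nat) : R := match k with O => R0 O | S k' => Rmin (minR R0 k') (R0 (S k')) end.

Lemma rho_exists (Rf : nat -> R) n0 : (forall n, 0 < Rf n) -> (forall n, (n0 <= n)%nat -> Rf n <= Rf (S n)) ->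
  exists rho, 0 < rho /\ forall n, rho <= Rf n.
Proof.
  intros Hp Hm.
  assert (H1 : forall k, 0 < minR Rf k /\ forall i, (i <= k)%nat -> minR Rf k <= Rf i).
  { induction k; simpl.
    - split; auto. intros i Hi. assert (i = 0%nat) by lia. subst. lra.
    - destruct IHk as [A B]. split. apply Rmin_pos; auto.
      intros i Hi. destruct (Nat.eq_dec i (S k)). subst. apply Rmin_r.
      eapply Rle_trans; [apply Rmin_l|]. apply B. lia. }
  exists (minR Rf n0). split. apply H1. intro n.
  destruct (Nat.le_gt_cases n n0). apply H1; auto.
  assert (forall d, minR Rf n0 <= Rf (n0 + d)%nat).
  { induction d. rewrite Nat.add_0_r. apply H1; auto.
    eapply Rle_trans; [apply IHd|]. replace (n0 + S d)%nat with (S (n0 + d)) by lia. apply Hm. lia. }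
  replace n with (n0 + (n - n0))%nat by lia. auto.
Qed.

Lemma sum_scal (f : nat -> R) c N : sum_f_R0 (fun i => c * f i) N = c * sum_f_R0 f N.
Proof. induction N; simpl; [auto|]. rewrite IHN. ring. Qed.

Lemma lower alpha s : 0 < alpha -> 0 < s < 1/2 -> ~ Hs_null s (F_set (1/2) alpha).
Proof.
  intros Ha Hs.
  destruct (params alpha s Ha Hs) as (A&m&n0&Hm&HA&Hstep&Hcv).
  assert (HA0 : forall i, (0 <= A i)%Z) by (intro i; specialize (HA i); specialize (Hm i); lia).
  set (Rf := fun n => Mp m n * Rpower (/ (2 * Pr A (S n))) s).
  assert (HRp : forall n, 0 < Rf n).
  { intro n. unfold Rf. apply Rmult_lt_0_compat. apply Mp_pos; auto. apply Rpower_pos. }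
  assert (HRm : forall n, (n0 <= n)%nat -> Rf n <= Rf (S n)).
  { intros n Hn. unfold Rf. simpl Mp. rewrite (Pr_S A (S n)).
    set (Y := IZR (A (S n)) + 1). set (P := Pr A (S n)).
    assert (HP : 1 <= P) by (apply Pr_pos; auto).
    assert (HY : 1 <= Y) by (unfold Y; assert (0 <= IZR (A (S n))) by (apply IZR_le; auto); lra).
    replace (/ (2 * (P * Y ^ 2))) with (/ (2 * P) * / (Y ^ 2)) by (field; split; nra).
    rewrite <- Rpower_mult_distr by (apply Rinv_0_lt_compat; nra).
    assert (E : Rpower (/ Y ^ 2) s = / Rpower Y (2 * s)).
    { unfold Rpower. rewrite <- exp_Ropp. f_equal. rewrite ln_Rinv by nra. rewrite ln_pow by lra. simpl. ring. }
    rewrite E. specialize (Hstep n Hn). fold Y in Hstep.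
    pose proof (Rpower_pos Y (2 * s)). pose proof (Mp_pos m n Hm). pose proof (Rpower_pos (/ (2 * P)) s).
    assert (1 <= IZR (m n) * / Rpower Y (2 * s)).
    { apply Rmult_le_reg_r with (Rpower Y (2 * s)); auto. rewrite Rmult_assoc, Rinv_l by lra. lra. }
    assert (0 < Mp m n * Rpower (/ (2 * P)) s) by (apply Rmult_lt_0_compat; auto).
    replace (Mp m n * IZR (m n) * (Rpower (/ (2 * P)) s * / Rpower Y (2 * s))) with
      ((Mp m n * Rpower (/ (2 * P)) s) * (IZR (m n) * / Rpower Y (2 * s))) by ring.
    nra. }
  destruct (rho_exists Rf n0 HRp HRm) as (rho&Hrho&Hrho2).
  intro HN.
  destruct (HN 1 (rho / 16)) as (U&d&Hcov&Hd&Hdiam&Hsum); [lra|lra|].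
  set (dg := fun t i => (A i - jj m t i)%Z).
  assert (Gdg : forall t, 0 <= t < 1 -> good (dg t)).
  { intros t Ht i. unfold dg. pose proof (jj_range m t i Hm Ht). specialize (HA i). lia. }
  assert (Fdg : forall t, 0 <= t < 1 -> F_set (1/2) alpha (X (dg t))).
  { intros t Ht. destruct (X_in _ (Gdg t Ht)) as [H1 H2]. split; [auto|split; auto].
    apply Hcv. intro i. rewrite dig_X by auto. unfold dg. pose proof (jj_range m t i Hm Ht). lia. }
  set (V := fun i t => 0 <= t <= 1/2 /\ U i (X (dg t))).
  set (e := fun i => / rho * Rpower (d i) s).
  destruct (cover_interval V e) as [N HNe].
  - intro i. unfold e. apply Rmult_lt_0_compat. apply Rinv_0_lt_compat; auto. apply Rpower_pos.
  - intros i u v [Hu1 Hu2] [Hv1 Hv2].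
    destruct (Req_dec u v) as [<-|Hne].
    + rewrite Rminus_diag, Rabs_R0. unfold e. left. apply Rmult_lt_0_compat. apply Rinv_0_lt_compat; auto. apply Rpower_pos.
    + destruct (holder A m s rho (proj1 Hs) Hrho Hm HA Hrho2 u v ltac:(lra) ltac:(lra) Hne) as [G1 G2].
      eapply Rle_trans; [apply G2|]. unfold e. apply Rmult_le_compat_l. left; apply Rinv_0_lt_compat; auto.
      apply Rle_Rpower_l. lra. split; [auto|apply Hdiam; auto].
  - intros t Ht. destruct (Hcov _ (Fdg t ltac:(lra))) as [i Hi]. exists i. split; auto.
  - unfold e in HNe. rewrite sum_scal in HNe. specialize (Hsum N).
    assert (/ rho * sum_f_R0 (fun i => Rpower (d i) s) N <= / rho * (rho / 16)).
    { apply Rmult_le_compat_l; auto. left; apply Rinv_0_lt_compat; auto. }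
    replace (/ rho * (rho / 16)) with (1/16) in H by (field; lra). lra.
Qed.

Theorem theorem1 : forall alpha : R, 0 < alpha -> dimH_is (F_set (1/2) alpha) (1/2).
Proof.
  intros alpha Ha. split.
  - intros s [Hs HN]. destruct (Rlt_or_le s (1/2)) as [Hlt|Hge]; auto.
    exfalso. apply (lower alpha s Ha (conj Hs Hlt) HN).
  - intros b Hb. destruct (Rle_or_lt b (1/2)) as [Hle|Hgt]; auto.
    exfalso. set (s := (b + 1/2) / 2).
    assert (Hs : 0 < s /\ Hs_null s (F_set (1/2) alpha)).
    { split. unfold s; lra. apply upper; auto. unfold s; lra. }
    specialize (Hb s Hs). unfold s in Hb. lra.
Qed.
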